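(* Let $\mathbf{RQF}$ be the category of restriction quantal frames and their morphisms and $\mathbf{EC}$ the category of étale topological categories and continuous covering functors. Then $\Omega\colon\mathbf{EC}\to\mathbf{RQF}^{op}$ (sending $C$ to $\Omega(C)$ and a continuous covering functor $\theta$ to $\theta^{-1}$) is left adjoint to $\mathsf{C}\colon\mathbf{RQF}^{op}\to\mathbf{EC}$ (sending $Q$ to $\mathsf{C}(Q)$ and a morphism $\phi$ to $\phi^{-1}$). Explicitly, for every étale category $C$ and restriction quantal frame $Q$, the assignments $\alpha\mapsto\alpha^{-1}\circ\chi$ and $\beta\mapsto\beta^{-1}\circ\omega$ are mutually inverse bijections, natural in $C$ and $Q$, between continuous covering functors $\alpha\colon C\to\mathsf{C}(Q)$ and morphisms of restriction quantal frames $\beta\colon Q\to\Omega(C)$.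
   Context: A restriction quantal frame is a frame $(Q,\le)$ with associative multiplication distributing over arbitrary joins on both sides, which is a monoid with identity $e$ and carries join-preserving unary operations $a\mapsto a^{\ast}$, $a\mapsto a^{+}$ with values in the set $e^{\downarrow}=\{x:x\le e\}$ of projections (a commutative subsemigroup of idempotents), fixing projections, with $aa^{\ast}=a$, $a^{+}a=a$, $(ab)^{\ast}=(a^{\ast}b)^{\ast}$, $(ab)^{+}=(ab^{+})^{+}$; the top element is a join of partial isometries ($a$ with $b\le a\Rightarrow b=b^{+}a=ab^{\ast}$) and partial isometries are closed under product. A morphism of restriction quantal frames is a semigroup homomorphism preserving all joins, finite meets, $\ast$, $+$, the top element and the identity, and mapping partial isometries to partial isometries. Étale topological category: small category (identities $C_o$, domain/codomain maps $\mathbf{d},\mathbf{r}$) with topology making $\mathbf{d}$, $\mathbf{r}$ and multiplication on composable pairs continuous, $\mathbf{d}$, $\mathbf{r}$ local homeomorphisms. Covering functor: a functor that is $\mathbf{d}$-injective, $\mathbf{d}$-surjective, $\mathbf{r}$-injective and $\mathbf{r}$-surjective (for $\mathbf{d}$: $F(x)=F(y)$ and $\mathbf{d}(x)=\mathbf{d}(y)$ imply $x=y$; and if $F(e)=\mathbf{d}(y)$ for an identity $e$ there is $x$ with $\mathbf{d}(x)=e$, $F(x)=y$). $\Omega(C)$: open subsets of $C$ with $UV=\{uv:u\in U,v\in V,\mathbf{d}(u)=\mathbf{r}(v)\}$, identity $C_o$, $U^{\ast}=\mathbf{d}(U)$, $U^{+}=\mathbf{r}(U)$. $\mathsf{C}(Q)$: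 completely prime filters of $Q$ (nonempty, upward closed, closed under binary meets, $0\notin A$, $\bigvee_ia_i\in A\Rightarrow$ some $a_i\in A$) with $\mathbf{d}(A)=(\{a^{\ast}:a\in A\})^{\uparrow}$, $\mathbf{r}(A)=(\{a^{+}:a\in A\})^{\uparrow}$, $A\cdot B=(AB)^{\uparrow}$ when $\mathbf{d}(A)=\mathbf{r}(B)$, topology with base $\mathscr{X}_a=\{A:a\in A\}$, $a$ a partial isometry. $\chi\colon Q\to\Omega(\mathsf{C}(Q))$ is $a\mapsto\mathscr{X}_a$; $\omega\colon C\to\mathsf{C}(\Omega(C))$ is $x\mapsto\{\text{open sets containing }x\}$. *)

(* Defs.v *)
From Stdlib Require Import ClassicalEpsilon.

Definition set_eq {T : Type} (A B : T -> Prop) : Prop := forall x, A x <-> B x.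
Definition preimage {A B : Type} (f : A -> B) (P : B -> Prop) : A -> Prop :=
  fun x => P (f x).
Definition image {A B : Type} (f : A -> B) (P : A -> Prop) : B -> Prop :=
  fun y => exists x, P x /\ f x = y.

Record rqf_ops := RQFOps {
  rq :> Type;
  rle : rq -> rq -> Prop;
  rsup : (rq -> Prop) -> rq;
  rmeet : rq -> rq -> rq;
  rmul : rq -> rq -> rq;
  re : rq;
  rstar : rq -> rq;
  rplus : rq -> rq }.
Arguments rle {r} _ _.
Arguments rsup {r} _.
Arguments rmeet {r} _ _.
Arguments rmul {r} _ _.
Arguments re {r}.
Arguments rstar {r} _.
Arguments rplus {r} _.

Definition rtop (Q : rqf_ops) : Q := rsup (fun _ : Q => True).
Definition rbot (Q : rqf_ops) : Q := rsup (fun _ : Q => False).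

Definition projection (Q : rqf_ops) (x : Q) : Prop := rle x re.

Definition partial_isometry (Q : rqf_ops) (a : Q) : Prop :=
  forall b : Q, rle b a -> b = rmul (rplus b) a /\ b = rmul a (rstar b).

Record rqf_axioms (Q : rqf_ops) : Prop := {
  le_refl : forall a : Q, rle a a;
  le_antisym : forall a b : Q, rle a b -> rle b a -> a = b;
  le_trans : forall a b c : Q, rle a b -> rle b c -> rle a c;
  sup_ub : forall (S : Q -> Prop) a, S a -> rle a (rsup S);
  sup_least : forall (S : Q -> Prop) b, (forall a, S a -> rle a b) -> rle (rsup S) b;
  meet_lb1 : forall a b : Q, rle (rmeet a b) a;
  meet_lb2 : forall a b : Q, rle (rmeet a b) b;
  meet_glb : forall a b c : Q, rle c a -> rle c b -> rle c (rmeet a b);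
  meet_sup_distr : forall (a : Q) S, rmeet a (rsup S) = rsup (image (rmeet a) S);
  mul_assoc : forall a b c : Q, rmul (rmul a b) c = rmul a (rmul b c);
  mul_e_l : forall a : Q, rmul re a = a;
  mul_e_r : forall a : Q, rmul a re = a;
  mul_sup_l : forall (a : Q) S, rmul a (rsup S) = rsup (image (rmul a) S);
  mul_sup_r : forall (a : Q) S, rmul (rsup S) a = rsup (image (fun s => rmul s a) S);
  star_sup : forall S : Q -> Prop, rstar (rsup S) = rsup (image rstar S);
  plus_sup : forall S : Q -> Prop, rplus (rsup S) = rsup (image rplus S);
  star_proj : forall a : Q, projection Q (rstar a);
  plus_proj : forall a : Q, projection Q (rplus a);
  star_fix : forall x : Q, projection Q x -> rstar x = x;
  plus_fix : forall x : Q, projection Q x -> rplus x = x;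
  proj_mul_closed : forall x y : Q, projection Q x -> projection Q y -> projection Q (rmul x y);
  proj_comm : forall x y : Q, projection Q x -> projection Q y -> rmul x y = rmul y x;
  proj_idem : forall x : Q, projection Q x -> rmul x x = x;
  mul_star : forall a : Q, rmul a (rstar a) = a;
  plus_mul : forall a : Q, rmul (rplus a) a = a;
  star_mul : forall a b : Q, rstar (rmul a b) = rstar (rmul (rstar a) b);
  plus_mul_r : forall a b : Q, rplus (rmul a b) = rplus (rmul a (rplus b));
  top_pi_join : exists S : Q -> Prop,
      (forall a, S a -> partial_isometry Q a) /\ rsup S = rtop Q;
  pi_mul : forall a b : Q, partial_isometry Q a -> partial_isometry Q b ->
      partial_isometry Q (rmul a b) }.

Record rqf_morphism {Q1 Q2 : rqf_ops} (f : Q1 -> Q2) : Prop := {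
  m_mul : forall a b, f (rmul a b) = rmul (f a) (f b);
  m_sup : forall S, f (rsup S) = rsup (image f S);
  m_meet : forall a b, f (rmeet a b) = rmeet (f a) (f b);
  m_star : forall a, f (rstar a) = rstar (f a);
  m_plus : forall a, f (rplus a) = rplus (f a);
  m_top : f (rtop Q1) = rtop Q2;
  m_e : f re = re;
  m_pi : forall a, partial_isometry Q1 a -> partial_isometry Q2 (f a) }.

(* A topological space (opens closed under unions, binary intersections,
   containing the whole space) carrying a category structure: arrows are the
   points, dom = d, cod = r, comp x y = xy (meaningful when d x = r y). *)
Record topcat := TopCat {
  tc :> Type;
  isopen : (tc -> Prop) -> Prop;
  open_union : forall F : (tc -> Prop) -> Prop,
      (forall U, F U -> isopen U) -> isopen (fun x => exists U, F U /\ U x);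
  open_inter : forall U V, isopen U -> isopen V -> isopen (fun x => U x /\ V x);
  open_full : isopen (fun _ => True);
  dom : tc -> tc;
  cod : tc -> tc;
  comp : tc -> tc -> tc }.
Arguments isopen {t} _.
Arguments dom {t} _.
Arguments cod {t} _.
Arguments comp {t} _ _.

Definition ids (C : topcat) (x : C) : Prop := dom x = x.

Record etale (C : topcat) : Prop := {
  cat_cod_dom : forall x : C, cod (dom x) = dom x;
  cat_dom_cod : forall x : C, dom (cod x) = cod x;
  cat_dom_dom : forall x : C, dom (dom x) = dom x;
  cat_cod_cod : forall x : C, cod (cod x) = cod x;
  cat_comp_dom : forall x y : C, dom x = cod y -> dom (comp x y) = dom y;
  cat_comp_cod : forall x y : C, dom x = cod y -> cod (comp x y) = cod x;
  cat_assoc : forall x y z : C, dom x = cod y -> dom y = cod z ->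
      comp (comp x y) z = comp x (comp y z);
  cat_id_r : forall x : C, comp x (dom x) = x;
  cat_id_l : forall x : C, comp (cod x) x = x;
  dom_cont : forall U : C -> Prop, isopen U -> isopen (preimage dom U);
  cod_cont : forall U : C -> Prop, isopen U -> isopen (preimage cod U);
  (* multiplication continuous on composable pairs (subspace of product) *)
  comp_cont : forall (W : C -> Prop) (x y : C), isopen W -> dom x = cod y ->
      W (comp x y) ->
      exists U V, isopen U /\ isopen V /\ U x /\ V y /\
        (forall u v, U u -> V v -> dom u = cod v -> W (comp u v));
  (* d, r : C -> C_o local homeomorphisms (C_o with the subspace topology) *)
  dom_lh : forall x : C, exists U, isopen U /\ U x /\
      (forall y z, U y -> U z -> dom y = dom z -> y = z) /\
      (forall V, isopen V -> (forall y, V y -> U y) ->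
         exists W, isopen W /\ set_eq (image dom V) (fun z => W z /\ ids C z));
  cod_lh : forall x : C, exists U, isopen U /\ U x /\
      (forall y z, U y -> U z -> cod y = cod z -> y = z) /\
      (forall V, isopen V -> (forall y, V y -> U y) ->
         exists W, isopen W /\ set_eq (image cod V) (fun z => W z /\ ids C z)) }.

Record covering {C D : topcat} (F : C -> D) : Prop := {
  f_dom : forall x, F (dom x) = dom (F x);
  f_cod : forall x, F (cod x) = cod (F x);
  f_comp : forall x y, dom x = cod y -> F (comp x y) = comp (F x) (F y);
  f_cont : forall V : D -> Prop, isopen V -> isopen (preimage F V);
  f_dinj : forall x y, F x = F y -> dom x = dom y -> x = y;
  f_rinj : forall x y, F x = F y -> cod x = cod y -> x = y;
  f_dsurj : forall (e : C) (y : D), ids C e -> F e = dom y ->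
      exists x, dom x = e /\ F x = y;
  f_rsurj : forall (e : C) (y : D), ids C e -> F e = cod y ->
      exists x, cod x = e /\ F x = y }.

Definition Opens (C : topcat) : Type := {U : C -> Prop | isopen U}.

(* packs a subset as an open set; the fallback branch is never used when the
   set is open (which is the case for all uses below when C is etale) *)
Definition pack_open (C : topcat) (P : C -> Prop) : Opens C :=
  match excluded_middle_informative (isopen P) with
  | left h => exist _ P h
  | right _ => exist _ (fun _ => True) (open_full C)
  end.

Definition Omega (C : topcat) : rqf_ops := {|
  rq := Opens C;
  rle := fun U V => forall x, proj1_sig U x -> proj1_sig V x;
  rsup := fun S => pack_open C (fun x => exists U, S U /\ proj1_sig U x);
  rmeet := fun U V => pack_open C (fun x => proj1_sig U x /\ proj1_sig V x);
  rmul := fun U V => pack_open C (fun z => exists u v,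
             proj1_sig U u /\ proj1_sig V v /\ dom u = cod v /\ z = comp u v);
  re := pack_open C (ids C);
  rstar := fun U => pack_open C (image dom (proj1_sig U));
  rplus := fun U => pack_open C (image cod (proj1_sig U)) |}.

Definition cpfilter (Q : rqf_ops) (A : Q -> Prop) : Prop :=
  (exists a, A a) /\
  (forall a b, A a -> rle a b -> A b) /\
  (forall a b, A a -> A b -> A (rmeet a b)) /\
  ~ A (rbot Q) /\
  (forall S : Q -> Prop, A (rsup S) -> exists s, S s /\ A s).

Definition Filt (Q : rqf_ops) : Type := {A : Q -> Prop | cpfilter Q A}.

(* fallback branch is never used when Q is a restriction quantal frame *)
Definition pack_filter (Q : rqf_ops) (P : Q -> Prop) (dflt : Filt Q) : Filt Q :=
  match excluded_middle_informative (cpfilter Q P) with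
  | left h => exist _ P h
  | right _ => dflt
  end.

Definition filt_dom (Q : rqf_ops) (A : Filt Q) : Filt Q :=
  pack_filter Q (fun b => exists a, proj1_sig A a /\ rle (rstar a) b) A.
Definition filt_cod (Q : rqf_ops) (A : Filt Q) : Filt Q :=
  pack_filter Q (fun b => exists a, proj1_sig A a /\ rle (rplus a) b) A.
Definition filt_comp (Q : rqf_ops) (A B : Filt Q) : Filt Q :=
  pack_filter Q (fun c => exists a b, proj1_sig A a /\ proj1_sig B b /\
                                      rle (rmul a b) c) A.

Definition basic_open (Q : rqf_ops) (U : Filt Q -> Prop) : Prop :=
  exists a, partial_isometry Q a /\ set_eq U (fun A => proj1_sig A a).

Definition gen_open (Q : rqf_ops) (U : Filt Q -> Prop) : Prop :=
  forall T : (Filt Q -> Prop) -> Prop,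
    (forall F : (Filt Q -> Prop) -> Prop,
        (forall V, F V -> T V) -> T (fun x => exists V, F V /\ V x)) ->
    (forall V W, T V -> T W -> T (fun x => V x /\ W x)) ->
    T (fun _ => True) ->
    (forall V, basic_open Q V -> T V) ->
    T U.

Lemma gen_open_union (Q : rqf_ops) : forall F : (Filt Q -> Prop) -> Prop,
  (forall U, F U -> gen_open Q U) -> gen_open Q (fun x => exists U, F U /\ U x).
Proof.
  intros F HF T Hu Hi Hf Hb. apply Hu. intros V HV. apply (HF V HV); assumption.
Qed.

Lemma gen_open_inter (Q : rqf_ops) : forall U V,
  gen_open Q U -> gen_open Q V -> gen_open Q (fun x => U x /\ V x).
Proof.
  intros U V HU HV T Hu Hi Hf Hb. apply Hi; [apply HU | apply HV]; assumption.
Qed.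

Lemma gen_open_full (Q : rqf_ops) : gen_open Q (fun _ => True).
Proof. intros T Hu Hi Hf Hb. exact Hf. Qed.

Definition CQ (Q : rqf_ops) : topcat := {|
  tc := Filt Q;
  isopen := gen_open Q;
  open_union := gen_open_union Q;
  open_inter := gen_open_inter Q;
  open_full := gen_open_full Q;
  dom := filt_dom Q;
  cod := filt_cod Q;
  comp := filt_comp Q |}.

Definition chi (Q : rqf_ops) (a : Q) : Filt Q -> Prop := fun A => proj1_sig A a.
Definition omega (C : topcat) (x : C) : Opens C -> Prop := fun U => proj1_sig U x.

(* Main.v *)
Require Import Defs.
From Stdlib Require Import ClassicalEpsilon ProofIrrelevance FunctionalExtensionality PropExtensionality Classical.

Module A.

Lemma sext {T : Type} (P R : T -> Prop) : (forall x, P x <-> R x) -> P = R.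
Proof. intro H. apply functional_extensionality; intro x; apply propositional_extensionality; apply H. Qed.

Lemma sig_ext {T : Type} {P : T -> Prop} (x y : sig P) : proj1_sig x = proj1_sig y -> x = y.
Proof. destruct x as [x hx], y as [y hy]; simpl; intros ->. f_equal. apply proof_irrelevance. Qed.

Definition up_star (Q : rqf_ops) (A : Q -> Prop) : Q -> Prop := fun b => exists a, A a /\ rle (rstar a) b.
Definition up_plus (Q : rqf_ops) (A : Q -> Prop) : Q -> Prop := fun b => exists a, A a /\ rle (rplus a) b.
Definition pset (Q : rqf_ops) (A B : Q -> Prop) : Q -> Prop :=
  fun c => exists a b, A a /\ B b /\ rle (rmul a b) c.

Section RQ.
Context (Q : rqf_ops) (HQ : rqf_axioms Q).
Local Infix "<=q" := (@rle Q) (at level 70).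
Local Infix "*q" := (@rmul Q) (at level 40, left associativity).

Lemma lrefl (a : Q) : a <=q a. Proof. apply (le_refl Q HQ). Qed.
Lemma ltrans (a b c : Q) : a <=q b -> b <=q c -> a <=q c. Proof. apply (le_trans Q HQ). Qed.
Lemma lanti (a b : Q) : a <=q b -> b <=q a -> a = b. Proof. apply (le_antisym Q HQ). Qed.

Lemma sup2 (b c : Q) : b <=q c -> rsup (fun x => x = b \/ x = c) = c.
Proof.
  intro H. apply lanti.
  - apply (sup_least Q HQ). intros x [->| ->]; [exact H| apply lrefl].
  - apply (sup_ub Q HQ). now right.
Qed.

Lemma sup_mono_img (f : Q -> Q) (b c : Q) : b <=q c ->
  f b <=q rsup (image f (fun x => x = b \/ x = c)).
Proof. intro. apply (sup_ub Q HQ). exists b. split; auto. Qed.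

Lemma mul_mono_l (a b c : Q) : b <=q c -> a *q b <=q a *q c.
Proof. intro H. rewrite <- (sup2 b c H), (mul_sup_l Q HQ). apply sup_mono_img; auto. Qed.
Lemma mul_mono_r (a b c : Q) : b <=q c -> b *q a <=q c *q a.
Proof. intro H. rewrite <- (sup2 b c H), (mul_sup_r Q HQ).
  apply (sup_mono_img (fun s => s *q a)); auto. Qed.
Lemma mul_mono (a b c d : Q) : a <=q b -> c <=q d -> a *q c <=q b *q d.
Proof. intros. eapply ltrans. apply mul_mono_l; eauto. apply mul_mono_r; auto. Qed.
Lemma star_mono (b c : Q) : b <=q c -> rstar b <=q rstar c.
Proof. intro H. rewrite <- (sup2 b c H), (star_sup Q HQ). apply sup_mono_img; auto. Qed.
Lemma plus_mono (b c : Q) : b <=q c -> rplus b <=q rplus c.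
Proof. intro H. rewrite <- (sup2 b c H), (plus_sup Q HQ). apply sup_mono_img; auto. Qed.

Lemma mlb1 (a b : Q) : rmeet a b <=q a. Proof. apply (meet_lb1 Q HQ). Qed.
Lemma mlb2 (a b : Q) : rmeet a b <=q b. Proof. apply (meet_lb2 Q HQ). Qed.
Lemma mglb (a b c : Q) : c <=q a -> c <=q b -> c <=q rmeet a b. Proof. apply (meet_glb Q HQ). Qed.
Lemma meet_mono (a b c d : Q) : a <=q b -> c <=q d -> rmeet a c <=q rmeet b d.
Proof. intros. apply mglb; [eapply ltrans; [apply mlb1|]|eapply ltrans; [apply mlb2|]]; auto. Qed.

Lemma img_empty {T U : Type} (f : T -> U) : image f (fun _ => False) = (fun _ => False).
Proof. apply sext. intros x; split; [intros [? [[] _]]| intros []]. Qed.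

Lemma bot_le (a : Q) : rbot Q <=q a.
Proof. apply (sup_least Q HQ). intros _ []. Qed.
Lemma le_bot (a : Q) : a <=q rbot Q -> a = rbot Q.
Proof. intro. apply lanti; auto using bot_le. Qed.
Lemma mul_bot_r (a : Q) : a *q rbot Q = rbot Q.
Proof. unfold rbot. rewrite (mul_sup_l Q HQ), img_empty. reflexivity. Qed.
Lemma mul_bot_l (a : Q) : rbot Q *q a = rbot Q.
Proof. unfold rbot. rewrite (mul_sup_r Q HQ), img_empty. reflexivity. Qed.
Lemma star_bot : rstar (rbot Q) = rbot Q.
Proof. unfold rbot. rewrite (star_sup Q HQ), img_empty. reflexivity. Qed.
Lemma plus_bot : rplus (rbot Q) = rbot Q.
Proof. unfold rbot. rewrite (plus_sup Q HQ), img_empty. reflexivity. Qed.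

Lemma star_zero (a : Q) : rstar a = rbot Q -> a = rbot Q.
Proof. intro H. rewrite <- (mul_star Q HQ a), H. apply mul_bot_r. Qed.
Lemma plus_zero (a : Q) : rplus a = rbot Q -> a = rbot Q.
Proof. intro H. rewrite <- (plus_mul Q HQ a), H. apply mul_bot_l. Qed.

Lemma top_ge (a : Q) : a <=q rtop Q.
Proof. apply (sup_ub Q HQ). exact I. Qed.

Lemma proj_le_r (p x : Q) : projection Q p -> p *q x <=q x.
Proof. intro H. rewrite <- (mul_e_l Q HQ x) at 2. apply mul_mono_r. exact H. Qed.
Lemma proj_le_l (p x : Q) : projection Q p -> x *q p <=q x.
Proof. intro H. rewrite <- (mul_e_r Q HQ x) at 2. apply mul_mono_l. exact H. Qed.
Lemma proj_below (p q : Q) : projection Q p -> rle q p -> projection Q q.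
Proof. intros. unfold projection. eapply ltrans; eauto. Qed.
Lemma proj_mul_le (p q : Q) : projection Q p -> projection Q q -> q <=q p -> p *q q = q.
Proof.
  intros Hp Hq H. apply lanti.
  - rewrite (proj_comm Q HQ); auto. apply proj_le_l; auto.
  - rewrite <- (proj_idem Q HQ q) at 1; auto. apply mul_mono_r; auto.
Qed.
Lemma proj_mul_le' (p q : Q) : projection Q p -> projection Q q -> q <=q p -> q *q p = q.
Proof. intros. rewrite (proj_comm Q HQ); auto. apply proj_mul_le; auto. Qed.
Lemma proj_meet (p q : Q) : projection Q p -> projection Q (rmeet p q).
Proof. intro. eapply proj_below; eauto. apply mlb1. Qed.
Lemma star_proj' (a : Q) : projection Q (rstar a). Proof. apply (star_proj Q HQ). Qed.
Lemma plus_proj' (a : Q) : projection Q (rplus a). Proof. apply (plus_proj Q HQ). Qed.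
Lemma e_proj : projection Q re. Proof. apply lrefl. Qed.

Lemma star_br (b r : Q) : projection Q r -> r <=q rstar b -> rstar (b *q r) = r.
Proof.
  intros Hr H. rewrite (star_mul Q HQ), (star_fix Q HQ).
  - apply proj_mul_le; auto using star_proj'.
  - apply (proj_mul_closed Q HQ); auto using star_proj'.
Qed.

Lemma pi_r (a c : Q) : partial_isometry Q a -> c <=q a -> c = a *q rstar c.
Proof. intros H1 H2. apply (H1 c H2). Qed.
Lemma pi_l (a c : Q) : partial_isometry Q a -> c <=q a -> c = rplus c *q a.
Proof. intros H1 H2. apply (H1 c H2). Qed.
Lemma pi_below (a b : Q) : partial_isometry Q a -> b <=q a -> partial_isometry Q b.
Proof.
  intros Ha Hb c Hc. assert (Hca : c <=q a) by (eapply ltrans; eauto). split; apply lanti.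
  - rewrite <- (plus_mul Q HQ c) at 1. apply mul_mono_l; auto.
  - rewrite (pi_l a c) at 2; auto. apply mul_mono_l; auto.
  - rewrite <- (mul_star Q HQ c) at 1. apply mul_mono_r; auto.
  - rewrite (pi_r a c) at 2; auto. apply mul_mono_r; auto.
Qed.
Lemma proj_pi (p : Q) : projection Q p -> partial_isometry Q p.
Proof.
  intros Hp c Hc. assert (Pc : projection Q c) by (eapply proj_below; eauto).
  rewrite (star_fix Q HQ), (plus_fix Q HQ); auto. split.
  - symmetry; apply proj_mul_le'; auto.
  - symmetry; apply proj_mul_le; auto.
Qed.

End RQ.

End A.
Import A.

Module B.

Section RQ2.
Context (Q : rqf_ops) (HQ : rqf_axioms Q).
Local Infix "<=q" := (@rle Q) (at level 70).
Local Infix "*q" := (@rmul Q) (at level 40, left associativity).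
Local Notation PI := (partial_isometry Q).
Let lrefl := A.lrefl Q HQ.
Let ltrans := A.ltrans Q HQ.
Let lanti := A.lanti Q HQ.
Let mul_mono_l := A.mul_mono_l Q HQ.
Let mul_mono_r := A.mul_mono_r Q HQ.
Let mul_mono := A.mul_mono Q HQ.
Let star_mono := A.star_mono Q HQ.
Let plus_mono := A.plus_mono Q HQ.
Let mlb1 := A.mlb1 Q HQ.
Let mlb2 := A.mlb2 Q HQ.
Let mglb := A.mglb Q HQ.
Let meet_mono := A.meet_mono Q HQ.
Let bot_le := A.bot_le Q HQ.
Let le_bot := A.le_bot Q HQ.
Let mul_bot_r := A.mul_bot_r Q HQ.
Let mul_bot_l := A.mul_bot_l Q HQ.
Let star_bot := A.star_bot Q HQ.
Let plus_bot := A.plus_bot Q HQ.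
Let star_zero := A.star_zero Q HQ.
Let plus_zero := A.plus_zero Q HQ.
Let top_ge := A.top_ge Q HQ.
Let proj_le_r := A.proj_le_r Q HQ.
Let proj_le_l := A.proj_le_l Q HQ.
Let proj_below := A.proj_below Q HQ.
Let proj_mul_le := A.proj_mul_le Q HQ.
Let proj_mul_le' := A.proj_mul_le' Q HQ.
Let proj_meet := A.proj_meet Q HQ.
Let star_proj' := A.star_proj' Q HQ.
Let plus_proj' := A.plus_proj' Q HQ.
Let e_proj := A.e_proj Q HQ.
Let star_br := A.star_br Q HQ.
Let pi_below := A.pi_below Q HQ.
Let proj_pi := A.proj_pi Q HQ.

Section F.
Context (A : Q -> Prop) (HA : cpfilter Q A).
Lemma cp_ne : exists a, A a. Proof. apply HA. Qed.
Lemma cp_up a b : A a -> a <=q b -> A b. Proof. apply HA. Qed.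
Lemma cp_meet a b : A a -> A b -> A (rmeet a b). Proof. apply HA. Qed.
Lemma cp_nbot : ~ A (rbot Q). Proof. apply HA. Qed.
Lemma cp_prime S : A (rsup S) -> exists s, S s /\ A s. Proof. apply HA. Qed.
Lemma cp_top : A (rtop Q).
Proof. destruct cp_ne as [a Ha]. eapply cp_up; [eauto|apply top_ge]. Qed.
Lemma cp_has_PI : exists s, PI s /\ A s.
Proof.
  destruct (top_pi_join Q HQ) as [S [HS1 HS2]].
  pose proof cp_top as T. rewrite <- HS2 in T. destruct (cp_prime _ T) as [s [Hs1 Hs2]].
  eauto.
Qed.
Lemma cp_PI_below a : A a -> exists b, PI b /\ b <=q a /\ A b.
Proof.
  intro Ha. destruct cp_has_PI as [s [Hs1 Hs2]]. exists (rmeet a s). split; [|split].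
  - apply pi_below with s; [auto|apply mlb2].
  - apply mlb1.
  - apply cp_meet; auto.
Qed.
Lemma cp_nz a : A a -> a <> rbot Q.
Proof. intros H E. subst. apply cp_nbot; auto. Qed.
End F.

Lemma a_sup_PI (a : Q) : a = rsup (fun b => PI b /\ b <=q a).
Proof.
  apply lanti.
  - destruct (top_pi_join Q HQ) as [S [HS1 HS2]].
    apply ltrans with (rmeet a (rsup S)).
    + apply mglb. apply lrefl. rewrite HS2. apply top_ge.
    + rewrite (meet_sup_distr Q HQ). apply (sup_least Q HQ). intros x [s [Hs E]]; subst x.
      apply (sup_ub Q HQ). split.
      * apply pi_below with s; [auto|apply mlb2].
      * apply mlb1.
  - apply (sup_least Q HQ). intros x [_ H]; auto.
Qed.

Lemma cp_star_PI F a : cpfilter Q F -> F (rstar a) -> exists b, PI b /\ b <=q a /\ F (rstar b).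
Proof.
  intros HF H.
  assert (E : rstar a = rsup (image rstar (fun b => PI b /\ b <=q a))).
  { rewrite (a_sup_PI a) at 1. apply (star_sup Q HQ). }
  rewrite E in H. destruct (cp_prime F HF _ H) as [s [[b [[Hb1 Hb2] <-]] Hs]]. eauto.
Qed.

Lemma D1 A : cpfilter Q A -> cpfilter Q (up_star Q A).
Proof.
  intro HA. split; [|split; [|split; [|split]]].
  - destruct (cp_ne A HA) as [a Ha]. exists (rstar a), a. split; [exact Ha|apply lrefl].
  - intros x y [a [Ha H1]] H2. exists a. split; [exact Ha|]. apply ltrans with x; assumption.
  - intros x y [a [Ha H1]] [b [Hb H2]]. exists (rmeet a b). split.
    + apply cp_meet; assumption.
    + apply mglb.
      * apply ltrans with (rstar a); [apply star_mono, mlb1|exact H1].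
      * apply ltrans with (rstar b); [apply star_mono, mlb2|exact H2].
  - intros [a [Ha H]]. apply le_bot in H. apply star_zero in H. subst.
    apply (cp_nbot A HA Ha).
  - intros S [a [Ha H]].
    set (T := image (rmeet (rstar a)) S).
    assert (E1 : rstar a = rsup T).
    { unfold T. rewrite <- (meet_sup_distr Q HQ). apply lanti.
      - apply mglb; [apply lrefl|exact H].
      - apply mlb1. }
    assert (E2 : a = rsup (image (rmul a) T)).
    { rewrite <- (mul_sup_l Q HQ), <- E1. symmetry; apply (mul_star Q HQ). }
    rewrite E2 in Ha. destruct (cp_prime A HA _ Ha) as [y [[t [[s [Hs E3]] E4]] Hy]].
    subst t y.
    exists s. split; [exact Hs|]. exists (a *q rmeet (rstar a) s). split; [exact Hy|].
    rewrite (star_mul Q HQ), (star_fix Q HQ).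
    + eapply ltrans. apply proj_le_r. apply star_proj'. apply mlb2.
    + apply (proj_mul_closed Q HQ). apply star_proj'. apply proj_meet. apply star_proj'.
Qed.

Lemma E1 F : cpfilter Q F -> F re -> forall x, up_star Q F x <-> F x.
Proof.
  intros HF He x. split.
  - intros [a [Ha H]]. apply cp_up with (rmeet a re); [assumption| |].
    + apply cp_meet; assumption.
    + apply ltrans with (rstar a); [|exact H].
      rewrite <- (star_fix Q HQ (rmeet a re)); [apply star_mono, mlb1|apply mlb2].
  - intros Hx. exists (rmeet x re). split; [apply cp_meet; assumption|].
    rewrite (star_fix Q HQ); [apply mlb1|apply mlb2].
Qed.

Lemma E2 A : cpfilter Q A -> up_star Q A re.
Proof. intro HA. destruct (cp_ne A HA) as [a Ha]. exists a. split; [exact Ha|apply star_proj']. Qed.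

Lemma AP A a p : cpfilter Q A -> A a -> up_star Q A p -> A (a *q p).
Proof.
  intros HA Ha [b [Hb H]]. apply cp_up with (rmeet a b); [assumption| |].
  - apply cp_meet; assumption.
  - rewrite <- (mul_star Q HQ (rmeet a b)) at 1. apply mul_mono; [apply mlb1|].
    apply ltrans with (rstar b); [apply star_mono, mlb2|exact H].
Qed.

Lemma L1 A B a : cpfilter Q A -> cpfilter Q B -> PI a -> A a -> B a ->
  (forall x, up_star Q A x <-> up_star Q B x) -> forall x, A x -> B x.
Proof.
  intros HA HB Pa Aa Ba E x Ax. set (y := rmeet x a).
  assert (Ay : A y) by (apply cp_meet; assumption).
  assert (Ey : y = a *q rstar y) by (apply pi_r; [exact Pa|apply mlb2]).
  apply cp_up with y; [exact HB| |apply mlb1]. rewrite Ey. apply AP; [exact HB|exact Ba|].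
  apply E. exists y. split; [exact Ay|apply lrefl].
Qed.

Lemma L1' A B a : cpfilter Q A -> cpfilter Q B -> PI a -> A a -> B a ->
  (forall x, up_star Q A x <-> up_star Q B x) -> forall x, A x <-> B x.
Proof. intros. split; [eapply L1 with (A:=A); eauto|]. apply L1 with a; auto. intro; symmetry; auto. Qed.

Definition lft (b : Q) (F : Q -> Prop) : Q -> Prop := fun c => exists p, F p /\ b *q p <=q c.

Lemma L2 b F : PI b -> cpfilter Q F -> F re -> F (rstar b) ->
  cpfilter Q (lft b F) /\ (forall x, up_star Q (lft b F) x <-> F x) /\ lft b F b.
Proof.
  intros Pb HF He Hb.
  assert (K : forall p, F p -> F (rmeet p (rstar b)) /\ projection Q (rmeet p (rstar b))
             /\ rstar (b *q rmeet p (rstar b)) = rmeet p (rstar b)).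
  { intros p Hp. assert (P : projection Q (rmeet p (rstar b))).
    { eapply proj_below; [apply star_proj'|apply mlb2]. }
    split; [apply cp_meet; assumption|split; [exact P|]]. apply star_br; [exact P|apply mlb2]. }
  split; [|split].
  - split; [|split; [|split; [|split]]].
    + exists b, re. split; [exact He|]. rewrite (mul_e_r Q HQ). apply lrefl.
    + intros x y [p [Hp H1]] H2. exists p. split; [exact Hp|]. apply ltrans with x; assumption.
    + intros x y [p [Hp H1]] [q [Hq H2]]. exists (rmeet p q). split; [apply cp_meet; assumption|].
      apply mglb.
      * apply ltrans with (b *q p); [apply mul_mono_l, mlb1|exact H1].
      * apply ltrans with (b *q q); [apply mul_mono_l, mlb2|exact H2].
    + intros [p [Hp H]]. destruct (K p Hp) as [K1 [K2 K3]].
      assert (Z : b *q rmeet p (rstar b) = rbot Q).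
      { apply le_bot. apply ltrans with (b *q p); [apply mul_mono_l, mlb1|exact H]. }
      rewrite Z, star_bot in K3. rewrite <- K3 in K1. apply (cp_nbot F HF K1).
    + intros S [p [Hp H]]. destruct (K p Hp) as [K1 [K2 K3]].
      set (c := b *q rmeet p (rstar b)).
      assert (Hcb : c <=q b) by (apply proj_le_l; exact K2).
      assert (Hc : c <=q rsup S).
      { apply ltrans with (b *q p); [apply mul_mono_l, mlb1|exact H]. }
      assert (E : c = rsup (image (rmeet c) S)).
      { rewrite <- (meet_sup_distr Q HQ). apply lanti; [apply mglb; [apply lrefl|exact Hc]|apply mlb1]. }
      assert (Fc : F (rstar c)) by (unfold c; rewrite K3; exact K1).
      rewrite E, (star_sup Q HQ) in Fc. destruct (cp_prime F HF _ Fc) as [y [[t [[s [Hs E3]] E4]] Hy]].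
      subst t y.
      exists s. split; [exact Hs|]. exists (rstar (rmeet c s)). split; [exact Hy|].
      rewrite <- (pi_r Q b); [apply mlb2|exact Pb|].
      apply ltrans with c; [apply mlb1|exact Hcb].
  - intro x. split.
    + intros [y [[p [Hp H1]] H2]]. destruct (K p Hp) as [K1 [K2 K3]].
      apply cp_up with (rmeet p (rstar b)); [exact HF|exact K1|]. rewrite <- K3.
      apply ltrans with (rstar y); [|exact H2].
      apply star_mono. apply ltrans with (b *q p); [apply mul_mono_l, mlb1|exact H1].
    + intro Hx. destruct (K x Hx) as [K1 [K2 K3]]. exists (b *q rmeet x (rstar b)). split.
      * exists (rmeet x (rstar b)). split; [exact K1|apply lrefl].
      * rewrite K3. apply mlb1.
  - exists re. split; [exact He|]. rewrite (mul_e_r Q HQ). apply lrefl.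
Qed.

Lemma pset_up A B x y : pset Q A B x -> x <=q y -> pset Q A B y.
Proof. intros [a [b [Ha [Hb H]]]] H2. exists a, b. split; [exact Ha|split; [exact Hb|]]. apply ltrans with x; assumption. Qed.

Lemma C1 A B : cpfilter Q A -> cpfilter Q B -> (forall x, up_star Q A x <-> up_plus Q B x) ->
  cpfilter Q (pset Q A B).
Proof.
  intros HA HB E. split; [|split; [|split; [|split]]].
  - destruct (cp_ne A HA) as [a Ha]. destruct (cp_ne B HB) as [b Hb].
    exists (a *q b), a, b. split; [exact Ha|split; [exact Hb|apply lrefl]].
  - intros; eapply pset_up; eauto.
  - intros x y [a [b [Ha [Hb H1]]]] [a' [b' [Ha' [Hb' H2]]]].
    exists (rmeet a a'), (rmeet b b'). split; [apply cp_meet; assumption|split; [apply cp_meet; assumption|]].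
    apply mglb.
    + apply ltrans with (a *q b); [apply mul_mono; apply mlb1|exact H1].
    + apply ltrans with (a' *q b'); [apply mul_mono; apply mlb2|exact H2].
  - intros [a [b [Ha [Hb H]]]].
    assert (Hs : up_star Q A (rstar a)) by (exists a; split; [exact Ha|apply lrefl]).
    apply E in Hs. destruct Hs as [b' [Hb' H']].
    set (b'' := rmeet b b').
    assert (Hb'' : B b'') by (apply cp_meet; assumption).
    assert (L : rplus b'' <=q rstar a).
    { apply ltrans with (rplus b'); [apply plus_mono, mlb2|exact H']. }
    assert (Z : a *q b'' = rbot Q).
    { apply le_bot. apply ltrans with (a *q b); [apply mul_mono_l, mlb1|exact H]. }
    assert (Z2 : rplus (a *q rplus b'') = rbot Q).
    { rewrite <- (plus_mul_r Q HQ), Z. apply plus_bot. }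
    apply plus_zero in Z2.
    assert (Z3 : rstar (a *q rplus b'') = rplus b'').
    { apply star_br; [apply plus_proj'|exact L]. }
    rewrite Z2, star_bot in Z3. symmetry in Z3. apply plus_zero in Z3.
    apply (cp_nbot B HB). rewrite <- Z3; exact Hb''.
  - intros S [a0 [b0 [Ha0 [Hb0 H]]]].
    destruct (cp_PI_below A HA a0 Ha0) as [a [Pa [Ha1 Ha]]].
    destruct (cp_PI_below B HB b0 Hb0) as [b [Pb [Hb1 Hb]]].
    assert (Pab : PI (a *q b)) by (apply (pi_mul Q HQ); assumption).
    assert (Hab : a *q b <=q rsup S) by (apply ltrans with (a0 *q b0); [apply mul_mono; assumption|exact H]).
    set (T := image (rmeet (a *q b)) S).
    assert (ET : a *q b = rsup T).
    { unfold T. rewrite <- (meet_sup_distr Q HQ). apply lanti; [apply mglb; [apply lrefl|exact Hab]|apply mlb1]. }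
    assert (Hplus : up_star Q A (rplus b)).
    { apply E. exists b. split; [exact Hb|apply lrefl]. }
    assert (Aab : A (a *q rplus b)) by (apply AP; assumption).
    assert (Eab : a *q rplus b = rplus (a *q b) *q a).
    { rewrite (plus_mul_r Q HQ). apply pi_l; [exact Pa|]. apply proj_le_l. apply plus_proj'. }
    rewrite Eab, ET, (plus_sup Q HQ), (mul_sup_r Q HQ) in Aab.
    destruct (cp_prime A HA _ Aab) as [y [[z [[t [[s [Hs E1]] E2]] E3]] Hy]].
    subst t z y.
    exists s. split; [exact Hs|]. exists (rplus (rmeet (a *q b) s) *q a), b.
    split; [exact Hy|split; [exact Hb|]].
    rewrite (mul_assoc Q HQ), <- pi_l; [apply mlb2|exact Pab|apply mlb1].
Qed.

Lemma C2 A B : cpfilter Q A -> cpfilter Q B -> (forall x, up_star Q A x <-> up_plus Q B x) ->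
  forall x, up_star Q (pset Q A B) x <-> up_star Q B x.
Proof.
  intros HA HB E x. split.
  - intros [y [[a [b [Ha [Hb H1]]]] H2]].
    assert (Hs : up_star Q A (rstar a)) by (exists a; split; [exact Ha|apply lrefl]).
    apply E in Hs. destruct Hs as [b' [Hb' H']].
    exists (rmeet b b'). split; [apply cp_meet; assumption|].
    apply ltrans with (rstar y); [|exact H2]. apply ltrans with (rstar (a *q b)); [|apply star_mono; exact H1].
    rewrite (star_mul Q HQ). apply star_mono.
    rewrite <- (plus_mul Q HQ (rmeet b b')) at 1. apply mul_mono; [|apply mlb1].
    apply ltrans with (rplus b'); [apply plus_mono, mlb2|exact H'].
  - intros [b [Hb H]]. destruct (cp_ne A HA) as [a Ha]. exists (a *q b). split.
    + exists a, b. split; [exact Ha|split; [exact Hb|apply lrefl]].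
    + apply ltrans with (rstar b); [|exact H]. rewrite (star_mul Q HQ). apply star_mono, proj_le_r, star_proj'.
Qed.

Lemma Cassoc A B C x : pset Q (pset Q A B) C x <-> pset Q A (pset Q B C) x.
Proof.
  split.
  - intros [y [c [[a [b [Ha [Hb H1]]]] [Hc H2]]]]. exists a, (b *q c).
    split; [exact Ha|split].
    + exists b, c. split; [exact Hb|split; [exact Hc|apply lrefl]].
    + rewrite <- (mul_assoc Q HQ). apply ltrans with (y *q c); [apply mul_mono_r; exact H1|exact H2].
  - intros [a [y [Ha [[b [c [Hb [Hc H1]]]] H2]]]]. exists (a *q b), c. split; [|split; [exact Hc|]].
    + exists a, b. split; [exact Ha|split; [exact Hb|apply lrefl]].
    + rewrite (mul_assoc Q HQ). apply ltrans with (a *q y); [apply mul_mono_l; exact H1|exact H2].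
Qed.

Lemma Cid A : cpfilter Q A -> forall x, pset Q A (up_star Q A) x <-> A x.
Proof.
  intros HA x. split.
  - intros [a [p [Ha [Hp H]]]]. apply cp_up with (a *q p); [exact HA| |exact H]. apply AP; assumption.
  - intro Hx. exists x, (rstar x). split; [exact Hx|split].
    + exists x. split; [exact Hx|apply lrefl].
    + rewrite (mul_star Q HQ). apply lrefl.
Qed.

End RQ2.

End B.
Import B.

Module Cop.

Definition opQ (Q : rqf_ops) : rqf_ops := {|
  rq := Q; rle := @rle Q; rsup := @rsup Q; rmeet := @rmeet Q;
  rmul := fun a b => @rmul Q b a; re := @re Q; rstar := @rplus Q; rplus := @rstar Q |}.

Lemma pi_op (Q : rqf_ops) (a : Q) : partial_isometry (opQ Q) a <-> partial_isometry Q a.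
Proof. split; intros H b Hb; destruct (H b Hb); split; assumption. Qed.

Lemma pset_op (Q : rqf_ops) A B x : pset (opQ Q) A B x <-> pset Q B A x.
Proof. split; intros [a [b [Ha [Hb H]]]]; exists b, a; auto. Qed.


Lemma op_axioms (Q : rqf_ops) : rqf_axioms Q -> rqf_axioms (opQ Q).
Proof.
  intro H. destruct H. split; simpl; auto.
  - intros. apply proj_mul_closed; auto.
  - destruct top_pi_join as [S [H1 H2]]. exists S. split; auto. intros a Ha. apply pi_op. auto.
  - intros a b Ha Hb. apply pi_op. apply pi_op in Ha. apply pi_op in Hb. apply pi_mul; auto.
Qed.

Section RQ3.
Context (Q : rqf_ops) (HQ : rqf_axioms Q).
Let HO := op_axioms Q HQ.
Local Infix "<=q" := (@rle Q) (at level 70).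
Local Infix "*q" := (@rmul Q) (at level 40, left associativity).
Local Notation PI := (partial_isometry Q).

Lemma D1p A : cpfilter Q A -> cpfilter Q (up_plus Q A).
Proof. exact (D1 (opQ Q) HO A). Qed.
Lemma E1p F : cpfilter Q F -> F re -> forall x, up_plus Q F x <-> F x.
Proof. exact (E1 (opQ Q) HO F). Qed.
Lemma E2p A : cpfilter Q A -> up_plus Q A re.
Proof. exact (E2 (opQ Q) HO A). Qed.
Lemma APp A a p : cpfilter Q A -> A a -> up_plus Q A p -> A (p *q a).
Proof. exact (AP (opQ Q) HO A a p). Qed.
Lemma L1p' A B a : cpfilter Q A -> cpfilter Q B -> PI a -> A a -> B a ->
  (forall x, up_plus Q A x <-> up_plus Q B x) -> forall x, A x <-> B x.
Proof. intros H1 H2 H3. apply (L1' (opQ Q) HO A B a H1 H2). apply pi_op; exact H3. Qed.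

Definition lftp (b : Q) (F : Q -> Prop) : Q -> Prop := fun c => exists p, F p /\ p *q b <=q c.
Lemma L2p b F : PI b -> cpfilter Q F -> F re -> F (rplus b) ->
  cpfilter Q (lftp b F) /\ (forall x, up_plus Q (lftp b F) x <-> F x) /\ lftp b F b.
Proof. intro H. apply (L2 (opQ Q) HO b F). apply pi_op; exact H. Qed.

Lemma cp_plus_PI F a : cpfilter Q F -> F (rplus a) -> exists b, PI b /\ b <=q a /\ F (rplus b).
Proof.
  intros H1 H2. destruct (cp_star_PI (opQ Q) HO F a H1 H2) as [b [Hb1 Hb2]].
  exists b. split; [apply pi_op; exact Hb1|exact Hb2].
Qed.

Lemma C3 A B : cpfilter Q A -> cpfilter Q B -> (forall x, up_star Q A x <-> up_plus Q B x) ->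
  forall x, up_plus Q (pset Q A B) x <-> up_plus Q A x.
Proof.
  intros HA HB E x.
  pose proof (C2 (opQ Q) HO B A HB HA (fun y => iff_sym (E y)) x) as K.
  simpl in K. rewrite <- K. unfold up_plus. split; intros [y [Hy1 Hy2]]; exists y; split; auto;
  apply pset_op; auto.
Qed.

Lemma C1' A B : cpfilter Q A -> cpfilter Q B -> (forall x, up_star Q A x <-> up_plus Q B x) ->
  cpfilter Q (pset Q A B).
Proof. exact (C1 Q HQ A B). Qed.

Lemma Cidl A : cpfilter Q A -> forall x, pset Q (up_plus Q A) A x <-> A x.
Proof. intros HA x. rewrite <- pset_op. exact (Cid (opQ Q) HO A HA x). Qed.

End RQ3.

End Cop.
Import Cop.

Module D.

Lemma pack_filter_spec (Q : rqf_ops) P d : cpfilter Q P -> proj1_sig (pack_filter Q P d) = P.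
Proof. intro H. unfold pack_filter. destruct (excluded_middle_informative (cpfilter Q P)); [reflexivity|contradiction]. Qed.

Lemma filt_ext (Q : rqf_ops) (A B : Filt Q) : (forall x, proj1_sig A x <-> proj1_sig B x) -> A = B.
Proof. intro H. apply sig_ext. apply sext. exact H. Qed.

Section CQS.
Context (Q : rqf_ops) (HQ : rqf_axioms Q).
Local Infix "<=q" := (@rle Q) (at level 70).
Local Infix "*q" := (@rmul Q) (at level 40, left associativity).
Local Notation PI := (partial_isometry Q).
Let lrefl := A.lrefl Q HQ.
Let ltrans := A.ltrans Q HQ.
Let mlb1 := A.mlb1 Q HQ.
Let mlb2 := A.mlb2 Q HQ.
Let star_mono := A.star_mono Q HQ.
Let plus_mono := A.plus_mono Q HQ.

Definition X (a : Q) : Filt Q -> Prop := fun A => proj1_sig A a.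

Lemma fcp (A : Filt Q) : cpfilter Q (proj1_sig A). Proof. exact (proj2_sig A). Qed.
Lemma fup (A : Filt Q) a b : proj1_sig A a -> a <=q b -> proj1_sig A b.
Proof. apply (cp_up Q _ (fcp A)). Qed.
Lemma fmeet (A : Filt Q) a b : proj1_sig A a -> proj1_sig A b -> proj1_sig A (rmeet a b).
Proof. apply (cp_meet Q _ (fcp A)). Qed.

Lemma dom_spec (A : Filt Q) : proj1_sig (filt_dom Q A) = up_star Q (proj1_sig A).
Proof. apply pack_filter_spec. apply D1; auto. apply fcp. Qed.
Lemma cod_spec (A : Filt Q) : proj1_sig (filt_cod Q A) = up_plus Q (proj1_sig A).
Proof. apply pack_filter_spec. apply D1p; auto. apply fcp. Qed.

Definition composable (A B : Filt Q) := forall x, up_star Q (proj1_sig A) x <-> up_plus Q (proj1_sig B) x.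

Lemma composable_iff (A B : Filt Q) : filt_dom Q A = filt_cod Q B <-> composable A B.
Proof.
  split.
  - intros E x. rewrite <- dom_spec, <- cod_spec, E. reflexivity.
  - intro E. apply filt_ext. intro x. rewrite dom_spec, cod_spec. apply E.
Qed.

Lemma comp_spec (A B : Filt Q) : composable A B ->
  proj1_sig (filt_comp Q A B) = pset Q (proj1_sig A) (proj1_sig B).
Proof. intro H. apply pack_filter_spec. apply C1; auto; apply fcp. Qed.

Lemma ids_iff (A : Filt Q) : ids (CQ Q) A <-> proj1_sig A re.
Proof.
  unfold ids; simpl. split.
  - intro E. rewrite <- E, dom_spec. apply E2; auto. apply fcp.
  - intro H. apply filt_ext. intro x. rewrite dom_spec. apply E1; auto. apply fcp.
Qed.

Lemma G1 V : gen_open Q V -> forall A : Filt Q, V A ->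
  exists b, PI b /\ proj1_sig A b /\ forall B : Filt Q, proj1_sig B b -> V B.
Proof.
  intro HV. apply HV.
  - intros F HF A [U [HU HA]]. destruct (HF U HU A HA) as [b [H1 [H2 H3]]].
    exists b. split; [exact H1|split; [exact H2|]]. intros B HB. exists U. auto.
  - intros V1 V2 H1 H2 A [HA1 HA2]. destruct (H1 A HA1) as [b1 [P1 [A1 K1]]].
    destruct (H2 A HA2) as [b2 [P2 [A2 K2]]]. exists (rmeet b1 b2). split; [|split].
    + apply A.pi_below with b1; [exact HQ|exact P1|apply mlb1].
    + apply fmeet; [exact A1|exact A2].
    + intros B HB. split; [apply K1|apply K2]; eapply fup; [exact HB|apply mlb1|exact HB|apply mlb2].
  - intros A _. destruct (cp_has_PI Q HQ _ (fcp A)) as [s [Hs1 Hs2]]. exists s. auto.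
  - intros V0 [a [Pa E]] A HA. exists a. split; [exact Pa|]. split; [apply E; exact HA|].
    intros B HB. apply E; exact HB.
Qed.

Lemma G2 a : PI a -> gen_open Q (X a).
Proof. intros Pa T _ _ _ Hb. apply Hb. exists a. split; [exact Pa|]. intro; reflexivity. Qed.

Lemma G3 a : gen_open Q (X a).
Proof.
  set (F := fun U : Filt Q -> Prop => exists b, PI b /\ b <=q a /\ U = X b).
  assert (E : X a = fun A => exists U, F U /\ U A).
  { apply sext. intro A. split.
    - intro H. destruct (cp_PI_below Q HQ _ (fcp A) a H) as [b [H1 [H2 H3]]].
      exists (X b). split; [exists b; auto|exact H3].
    - intros [U [[b [H1 [H2 ->]]] H3]]. apply fup with b; [exact H3|exact H2]. }
  rewrite E. apply gen_open_union. intros U [b [H1 [H2 ->]]]. apply G2; exact H1.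
Qed.

Lemma cont_into (C : topcat) (f : C -> Filt Q) :
  (forall a, PI a -> isopen (fun x => proj1_sig (f x) a)) ->
  forall V, gen_open Q V -> isopen (preimage f V).
Proof.
  intros Hb V HV. apply HV.
  - intros F HF.
    set (G := fun W : C -> Prop => exists U, F U /\ W = preimage f U).
    assert (E : preimage f (fun x => exists U, F U /\ U x) = fun x => exists W, G W /\ W x).
    { apply sext. intro x. unfold preimage. split.
      - intros [U [H1 H2]]. exists (preimage f U). split; [exists U; auto|exact H2].
      - intros [W [[U [H1 ->]] H2]]. exists U. auto. }
    rewrite E. apply open_union. intros W [U [H1 ->]]. apply HF; exact H1.
  - intros V1 V2 H1 H2. apply (open_inter C _ _ H1 H2).
  - apply open_full.
  - intros V0 [a [Pa E]].
    assert (E' : V0 = X a) by (apply sext; exact E). subst V0. apply Hb; exact Pa.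
Qed.

Lemma upstar_open a : gen_open Q (fun A : Filt Q => up_star Q (proj1_sig A) a).
Proof.
  set (F := fun U : Filt Q -> Prop => exists b, PI b /\ rstar b <=q a /\ U = X b).
  assert (E : (fun A : Filt Q => up_star Q (proj1_sig A) a) = fun A => exists U, F U /\ U A).
  { apply sext. intro A. split.
    - intros [c [Hc H]]. destruct (cp_PI_below Q HQ _ (fcp A) c Hc) as [b [H1 [H2 H3]]].
      exists (X b). split; [exists b; split; [exact H1|split; [|reflexivity]]|exact H3].
      apply ltrans with (rstar c); [apply star_mono; exact H2|exact H].
    - intros [U [[b [H1 [H2 ->]]] H3]]. exists b. auto. }
  rewrite E. apply gen_open_union. intros U [b [H1 [H2 ->]]]. apply G2; exact H1.
Qed.

Lemma upplus_open a : gen_open Q (fun A : Filt Q => up_plus Q (proj1_sig A) a).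
Proof.
  set (F := fun U : Filt Q -> Prop => exists b, PI b /\ rplus b <=q a /\ U = X b).
  assert (E : (fun A : Filt Q => up_plus Q (proj1_sig A) a) = fun A => exists U, F U /\ U A).
  { apply sext. intro A. split.
    - intros [c [Hc H]]. destruct (cp_PI_below Q HQ _ (fcp A) c Hc) as [b [H1 [H2 H3]]].
      exists (X b). split; [exists b; split; [exact H1|split; [|reflexivity]]|exact H3].
      apply ltrans with (rplus c); [apply plus_mono; exact H2|exact H].
    - intros [U [[b [H1 [H2 ->]]] H3]]. exists b. auto. }
  rewrite E. apply gen_open_union. intros U [b [H1 [H2 ->]]]. apply G2; exact H1.
Qed.

Lemma CQ_etale : etale (CQ Q).
Proof.
  split; simpl.
  - intro x. apply filt_ext. intro a. rewrite cod_spec, dom_spec.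
    apply E1p; [exact HQ|apply D1; [exact HQ|apply fcp]|apply E2; [exact HQ|apply fcp]].
  - intro x. apply filt_ext. intro a. rewrite dom_spec, cod_spec.
    apply E1; [exact HQ|apply D1p; [exact HQ|apply fcp]|apply E2p; [exact HQ|apply fcp]].
  - intro x. apply filt_ext. intro a. rewrite !dom_spec.
    apply E1; [exact HQ|apply D1; [exact HQ|apply fcp]|apply E2; [exact HQ|apply fcp]].
  - intro x. apply filt_ext. intro a. rewrite !cod_spec.
    apply E1p; [exact HQ|apply D1p; [exact HQ|apply fcp]|apply E2p; [exact HQ|apply fcp]].
  - intros x y H. apply composable_iff in H. apply filt_ext. intro a.
    rewrite !dom_spec, comp_spec by exact H. apply C2; [exact HQ|apply fcp|apply fcp|exact H].
  - intros x y H. apply composable_iff in H. apply filt_ext. intro a.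
    rewrite !cod_spec, comp_spec by exact H. apply C3; [exact HQ|apply fcp|apply fcp|exact H].
  - intros x y z H1 H2. apply composable_iff in H1. apply composable_iff in H2.
    assert (H3 : composable (filt_comp Q x y) z).
    { intro a. rewrite <- (H2 a), comp_spec by exact H1. apply C2; [exact HQ|apply fcp|apply fcp|exact H1]. }
    assert (H4 : composable x (filt_comp Q y z)).
    { intro a. rewrite (H1 a), comp_spec by exact H2. symmetry. apply C3; [exact HQ|apply fcp|apply fcp|exact H2]. }
    apply filt_ext. intro a. rewrite (comp_spec _ _ H3), (comp_spec _ _ H4), comp_spec, comp_spec by assumption.
    apply Cassoc; exact HQ.
  - intro x. assert (H : composable x (filt_dom Q x)).
    { intro a. rewrite dom_spec. symmetry.
      apply E1p; [exact HQ|apply D1; [exact HQ|apply fcp]|apply E2; [exact HQ|apply fcp]]. }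
    apply filt_ext. intro a. rewrite comp_spec by exact H. rewrite dom_spec. apply Cid; [exact HQ|apply fcp].
  - intro x. assert (H : composable (filt_cod Q x) x).
    { intro a. rewrite cod_spec.
      apply E1; [exact HQ|apply D1p; [exact HQ|apply fcp]|apply E2p; [exact HQ|apply fcp]]. }
    apply filt_ext. intro a. rewrite comp_spec by exact H. rewrite cod_spec. apply Cidl; [exact HQ|apply fcp].
  - intros U HU. apply (cont_into (CQ Q) (filt_dom Q)); [|exact HU].
    intros a _. simpl. assert (E : (fun x : Filt Q => proj1_sig (filt_dom Q x) a) = fun A => up_star Q (proj1_sig A) a).
    { apply sext. intro A. rewrite dom_spec. reflexivity. }
    rewrite E. apply upstar_open.
  - intros U HU. apply (cont_into (CQ Q) (filt_cod Q)); [|exact HU].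
    intros a _. simpl. assert (E : (fun x : Filt Q => proj1_sig (filt_cod Q x) a) = fun A => up_plus Q (proj1_sig A) a).
    { apply sext. intro A. rewrite cod_spec. reflexivity. }
    rewrite E. apply upplus_open.
  - intros W x y HW. revert x y. apply HW.
    + intros F HF x y Hxy [U [HU Hx]]. destruct (HF U HU x y Hxy Hx) as [U1 [V1 [K1 [K2 [K3 [K4 K5]]]]]].
      exists U1, V1. repeat split; auto. intros u v Hu Hv Huv. exists U. auto.
    + intros W1 W2 H1 H2 x y Hxy [Hx1 Hx2].
      destruct (H1 x y Hxy Hx1) as [U1 [V1 [K1 [K2 [K3 [K4 K5]]]]]].
      destruct (H2 x y Hxy Hx2) as [U2 [V2 [L1 [L2 [L3 [L4 L5]]]]]].
      exists (fun z => U1 z /\ U2 z), (fun z => V1 z /\ V2 z).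
      split; [apply gen_open_inter; auto|split; [apply gen_open_inter; auto|]].
      split; [auto|split; [auto|]]. intros u v [Hu1 Hu2] [Hv1 Hv2] Huv. split; auto.
    + intros x y _ _. exists (fun _ => True), (fun _ => True). repeat split; auto; apply gen_open_full.
    + intros V [c [Pc E]] x y Hxy Hc. apply E in Hc. apply composable_iff in Hxy.
      rewrite comp_spec in Hc by exact Hxy. destruct Hc as [a [b [Ha [Hb H]]]].
      exists (X a), (X b). split; [apply G3|split; [apply G3|split; [exact Ha|split; [exact Hb|]]]].
      intros u v Hu Hv Huv. apply composable_iff in Huv. apply E.
      rewrite comp_spec by exact Huv. exists a, b. auto.
  - intro x. destruct (cp_has_PI Q HQ _ (fcp x)) as [a [Pa Ha]].
    exists (X a). split; [apply G2; exact Pa|split; [exact Ha|split]].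
    + intros y z Hy Hz E. apply filt_ext. apply L1' with a; try apply fcp; auto.
      intro b. rewrite <- !dom_spec, E. reflexivity.
    + intros V HV _.
      set (F := fun U : Filt Q -> Prop => exists b, PI b /\ (forall B : Filt Q, proj1_sig B b -> V B)
                  /\ U = X (rstar b)).
      exists (fun z => exists U, F U /\ U z). split.
      { apply gen_open_union. intros U [b [H1 [H2 ->]]]. apply G2. apply A.proj_pi; [exact HQ|apply A.star_proj'; exact HQ]. }
      intro z. split.
      * intros [A [HA <-]]. destruct (G1 V HV A HA) as [b [H1 [H2 H3]]]. split.
        -- exists (X (rstar b)). split; [exists b; auto|]. unfold X. rewrite dom_spec. exists b. split; [exact H2|apply lrefl].
        -- apply ids_iff. simpl. rewrite dom_spec. apply E2; [exact HQ|apply fcp].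
      * intros [[U [[b [H1 [H2 ->]]] Hz]] Hid]. apply ids_iff in Hid.
        destruct (L2 Q HQ b (proj1_sig z) H1 (fcp z) Hid Hz) as [K1 [K2 K3]].
        exists (exist _ (lft Q b (proj1_sig z)) K1). split; [apply H2; exact K3|].
        -- simpl. apply filt_ext. intro c. rewrite dom_spec. simpl. apply K2.
  - intro x. destruct (cp_has_PI Q HQ _ (fcp x)) as [a [Pa Ha]].
    exists (X a). split; [apply G2; exact Pa|split; [exact Ha|split]].
    + intros y z Hy Hz E. apply filt_ext. apply L1p' with a; try apply fcp; auto.
      intro b. rewrite <- !cod_spec, E. reflexivity.
    + intros V HV _.
      set (F := fun U : Filt Q -> Prop => exists b, PI b /\ (forall B : Filt Q, proj1_sig B b -> V B)
                  /\ U = X (rplus b)).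
      exists (fun z => exists U, F U /\ U z). split.
      { apply gen_open_union. intros U [b [H1 [H2 ->]]]. apply G2. apply A.proj_pi; [exact HQ|apply A.plus_proj'; exact HQ]. }
      intro z. split.
      * intros [A [HA <-]]. destruct (G1 V HV A HA) as [b [H1 [H2 H3]]]. split.
        -- exists (X (rplus b)). split; [exists b; auto|]. unfold X. rewrite cod_spec. exists b. split; [exact H2|apply lrefl].
        -- apply ids_iff. simpl. rewrite cod_spec. apply E2p; [exact HQ|apply fcp].
      * intros [[U [[b [H1 [H2 ->]]] Hz]] Hid]. apply ids_iff in Hid.
        destruct (L2p Q HQ b (proj1_sig z) H1 (fcp z) Hid Hz) as [K1 [K2 K3]].
        exists (exist _ (lftp Q b (proj1_sig z)) K1). split; [apply H2; exact K3|].
        -- simpl. apply filt_ext. intro c. rewrite cod_spec. simpl. apply K2.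
Qed.

End CQS.

End D.
Import D.

Module E.

Lemma pack_open_spec (C : topcat) (P : C -> Prop) : isopen P -> proj1_sig (pack_open C P) = P.
Proof. intro H. unfold pack_open. destruct (excluded_middle_informative (isopen P)); [reflexivity|contradiction]. Qed.

Lemma pack_open_ge (C : topcat) (P : C -> Prop) x : P x -> proj1_sig (pack_open C P) x.
Proof. intro H. unfold pack_open. destruct (excluded_middle_informative (isopen P)); simpl; auto. Qed.

Lemma opens_ext (C : topcat) (U V : Opens C) : (forall x, proj1_sig U x <-> proj1_sig V x) -> U = V.
Proof. intro H. apply sig_ext. apply sext. exact H. Qed.

Lemma open_local (C : topcat) (P : C -> Prop) :
  (forall x, P x -> exists U, isopen U /\ U x /\ forall y, U y -> P y) -> isopen P.
Proof.
  intro H. set (F := fun U : C -> Prop => isopen U /\ forall y, U y -> P y).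
  assert (E : P = fun x => exists U, F U /\ U x).
  { apply sext. intro x. split.
    - intro Hx. destruct (H x Hx) as [U [H1 [H2 H3]]]. exists U. split; [split|]; auto.
    - intros [U [[H1 H2] H3]]. auto. }
  rewrite E. apply open_union. intros U [H1 _]. exact H1.
Qed.

Definition prodset (C : topcat) (U V : C -> Prop) : C -> Prop :=
  fun z => exists u v, U u /\ V v /\ dom u = cod v /\ z = comp u v.

Definition bisection (C : topcat) (U : C -> Prop) : Prop :=
  (forall y z, U y -> U z -> dom y = dom z -> y = z) /\
  (forall y z, U y -> U z -> cod y = cod z -> y = z).

Section OM.
Context (C : topcat) (HC : etale C).

Lemma ids_open : @isopen C (ids C).
Proof.
  apply open_local. intros x Hx. destruct (dom_lh C HC x) as [U [HU [Ux [Inj _]]]].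
  exists (fun z => U z /\ U (dom z)). split; [|split].
  - exact (open_inter C U (preimage dom U) HU (dom_cont C HC U HU)).
  - split; [exact Ux|]. unfold ids in Hx. rewrite Hx. exact Ux.
  - intros y [H1 H2]. unfold ids. symmetry. apply Inj; auto. symmetry. apply (cat_dom_dom C HC).
Qed.

Lemma img_dom_open (V : C -> Prop) : isopen V -> isopen (image dom V).
Proof.
  intro HV. apply open_local. intros y [x [Vx <-]].
  destruct (dom_lh C HC x) as [U [HU [Ux [Inj K]]]].
  destruct (K (fun z => V z /\ U z)) as [W [HW E]].
  { apply (open_inter C V U HV HU). }
  { intros z [_ H]; exact H. }
  exists (fun z => W z /\ ids C z). split; [apply (open_inter C W _ HW ids_open)|split].
  - apply E. exists x. auto.
  - intros z Hz. apply E in Hz. destruct Hz as [w [[Vw _] <-]]. exists w. auto.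
Qed.

Lemma img_cod_open (V : C -> Prop) : isopen V -> isopen (image cod V).
Proof.
  intro HV. apply open_local. intros y [x [Vx <-]].
  destruct (cod_lh C HC x) as [U [HU [Ux [Inj K]]]].
  destruct (K (fun z => V z /\ U z)) as [W [HW E]].
  { apply (open_inter C V U HV HU). }
  { intros z [_ H]; exact H. }
  exists (fun z => W z /\ ids C z). split; [apply (open_inter C W _ HW ids_open)|split].
  - apply E. exists x. auto.
  - intros z Hz. apply E in Hz. destruct Hz as [w [[Vw _] <-]]. exists w. auto.
Qed.

Lemma prod_open (U V : C -> Prop) : isopen U -> isopen V -> isopen (prodset C U V).
Proof.
  intros HU HV. apply open_local. intros z [u [v [Uu [Vv [Huv ->]]]]].
  destruct (dom_lh C HC (comp u v)) as [N [HN [Nz [Inj _]]]].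
  destruct (comp_cont C HC N u v HN Huv Nz) as [U1 [V1 [HU1 [HV1 [U1u [V1v K]]]]]].
  set (O' := fun v' => V v' /\ V1 v' /\ image dom (fun u' => U u' /\ U1 u') (cod v')).
  assert (HO : isopen O').
  { unfold O'. apply (open_inter C V (fun v' => V1 v' /\ image dom (fun u' => U u' /\ U1 u') (cod v')) HV). apply (open_inter C V1 (fun v' => image dom (fun u' => U u' /\ U1 u') (cod v')) HV1).
    exact (cod_cont C HC _ (img_dom_open _ (open_inter C U U1 HU HU1))). }
  exists (fun w => N w /\ image dom O' (dom w)). split; [|split].
  - apply (open_inter C N (fun w => image dom O' (dom w)) HN). exact (dom_cont C HC _ (img_dom_open _ HO)).
  - split; [exact Nz|]. exists v. split.
    + split; [exact Vv|split; [exact V1v|]]. exists u. split; [auto|exact Huv].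
    + symmetry. apply (cat_comp_dom C HC). exact Huv.
  - intros w [Nw [o [[Vo [V1o [u' [[Uu' U1u'] Eu']]]] Eo]]].
    exists u', o. split; [exact Uu'|split; [exact Vo|split; [exact Eu'|]]].
    apply Inj; auto. rewrite (cat_comp_dom C HC) by exact Eu'. symmetry. exact Eo.
Qed.

Lemma sup_spec (S : Opens C -> Prop) :
  proj1_sig (@rsup (Omega C) S) = fun x => exists U, S U /\ proj1_sig U x.
Proof.
  simpl. apply pack_open_spec.
  set (F := fun W : C -> Prop => exists U, S U /\ W = proj1_sig U).
  assert (E : (fun x => exists U, S U /\ proj1_sig U x) = fun x => exists W, F W /\ W x).
  { apply sext. intro x. split.
    - intros [U [H1 H2]]. exists (proj1_sig U). split; [exists U; auto|exact H2].
    - intros [W [[U [H1 ->]] H2]]. exists U. auto. }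
  rewrite E. apply open_union. intros W [U [_ ->]]. exact (proj2_sig U).
Qed.

Lemma meet_spec (U V : Opens C) :
  proj1_sig (@rmeet (Omega C) U V) = fun x => proj1_sig U x /\ proj1_sig V x.
Proof. simpl. apply pack_open_spec. apply open_inter; [exact (proj2_sig U)|exact (proj2_sig V)]. Qed.

Lemma mul_spec (U V : Opens C) :
  proj1_sig (@rmul (Omega C) U V) = prodset C (proj1_sig U) (proj1_sig V).
Proof. simpl. apply pack_open_spec. apply prod_open; [exact (proj2_sig U)|exact (proj2_sig V)]. Qed.

Lemma e_spec : proj1_sig (@re (Omega C)) = ids C.
Proof. simpl. apply pack_open_spec. apply ids_open. Qed.

Lemma star_spec (U : Opens C) : proj1_sig (@rstar (Omega C) U) = image dom (proj1_sig U).
Proof. simpl. apply pack_open_spec. apply img_dom_open. exact (proj2_sig U). Qed.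

Lemma plus_spec (U : Opens C) : proj1_sig (@rplus (Omega C) U) = image cod (proj1_sig U).
Proof. simpl. apply pack_open_spec. apply img_cod_open. exact (proj2_sig U). Qed.

Lemma top_spec : proj1_sig (rtop (Omega C)) = fun _ => True.
Proof.
  unfold rtop. rewrite sup_spec. apply sext. intro x. split; [auto|].
  intros _. exists (exist _ (fun _ => True) (open_full C)). simpl. auto.
Qed.

Lemma bot_spec : proj1_sig (rbot (Omega C)) = fun _ => False.
Proof. unfold rbot. rewrite sup_spec. apply sext. intro x. split; [intros [U [[] _]]|intros []]. Qed.

Ltac oext := apply opens_ext; intro.
Ltac rsp := repeat (rewrite ?sup_spec, ?meet_spec, ?mul_spec, ?e_spec, ?star_spec, ?plus_spec).

Lemma id_cod (x : C) : ids C x -> cod x = x.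
Proof. unfold ids. intro H. rewrite <- H at 1. rewrite (cat_cod_dom C HC). exact H. Qed.

Lemma bisec_pi (U : Opens C) : bisection C (proj1_sig U) -> partial_isometry (Omega C) U.
Proof.
  intros [Id Ic] b Hb. simpl in Hb. split; oext; rsp.
  - split.
    + intro H. exists (cod x), x. split; [exists x; auto|split; [apply Hb; exact H|split]].
      * apply (cat_dom_cod C HC).
      * symmetry. apply (cat_id_l C HC).
    + intros [u [v [[y [Hy <-]] [Hv [E ->]]]]]. rewrite (cat_dom_cod C HC) in E.
      assert (y = v) by (apply Ic; auto). subst y. rewrite (cat_id_l C HC). exact Hy.
  - split.
    + intro H. exists x, (dom x). split; [apply Hb; exact H|split; [exists x; auto|split]].
      * symmetry. apply (cat_cod_dom C HC).
      * symmetry. apply (cat_id_r C HC).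
    + intros [u [v [Hu [[y [Hy <-]] [E ->]]]]]. rewrite (cat_cod_dom C HC) in E.
      assert (u = y) by (apply Id; auto). subst u. rewrite (cat_id_r C HC). exact Hy.
Qed.

Lemma pi_bisec (U : Opens C) : partial_isometry (Omega C) U -> bisection C (proj1_sig U).
Proof.
  intro P. split.
  - intros x y Hx Hy E. destruct (dom_lh C HC x) as [U0 [HU0 [U0x [Inj _]]]].
    set (b := exist _ (fun z => proj1_sig U z /\ U0 z) (open_inter C _ _ (proj2_sig U) HU0) : Opens C).
    assert (Hb : @rle (Omega C) b U) by (intros z [H _]; exact H).
    destruct (P b Hb) as [_ E2].
    assert (Hyb : proj1_sig b y).
    { rewrite E2, mul_spec, star_spec. exists y, (dom y). split; [exact Hy|split].
      - exists x. split; [split; auto|]. exact E.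
      - split; [symmetry; apply (cat_cod_dom C HC)|symmetry; apply (cat_id_r C HC)]. }
    destruct Hyb as [_ Hy0]. apply Inj; auto.
  - intros x y Hx Hy E. destruct (cod_lh C HC x) as [U0 [HU0 [U0x [Inj _]]]].
    set (b := exist _ (fun z => proj1_sig U z /\ U0 z) (open_inter C _ _ (proj2_sig U) HU0) : Opens C).
    assert (Hb : @rle (Omega C) b U) by (intros z [H _]; exact H).
    destruct (P b Hb) as [E2 _].
    assert (Hyb : proj1_sig b y).
    { rewrite E2, mul_spec, plus_spec. exists (cod y), y. split; [|split; [exact Hy|]].
      - exists x. split; [split; auto|]. exact E.
      - split; [apply (cat_dom_cod C HC)|symmetry; apply (cat_id_l C HC)]. }
    destruct Hyb as [_ Hy0]. apply Inj; auto.
Qed.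

Lemma prod_ids (U V : C -> Prop) : (forall x, U x -> ids C x) -> (forall x, V x -> ids C x) ->
  forall z, prodset C U V z <-> U z /\ V z.
Proof.
  intros HU HV z. split.
  - intros [u [v [Hu [Hv [E ->]]]]].
    pose proof (HU u Hu) as Iu. pose proof (HV v Hv) as Iv. unfold ids in Iu.
    rewrite Iu, (id_cod v Iv) in E. subst v. pose proof (cat_id_r C HC u) as K. rewrite Iu in K.
    rewrite K. auto.
  - intros [Hu Hv]. exists z, z. split; [exact Hu|split; [exact Hv|split]].
    + rewrite (id_cod z (HU z Hu)). apply HU; exact Hu.
    + pose proof (HU z Hu) as Iz. unfold ids in Iz. pose proof (cat_id_r C HC z) as K. rewrite Iz in K.
      symmetry; exact K.
Qed.

End OM.

End E.
Import E.

Module F.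

Section OM2.
Context (C : topcat) (HC : etale C).
Ltac oext := apply opens_ext; intro.
Ltac rsp := repeat (rewrite ?(sup_spec C), ?(meet_spec C), ?(mul_spec C HC), ?(e_spec C HC), ?(star_spec C HC), ?(plus_spec C HC)); cbv beta.

Lemma Omega_axioms : rqf_axioms (Omega C).
Proof.
  pose proof (cat_cod_dom C HC) as cd. pose proof (cat_dom_cod C HC) as dc.
  pose proof (cat_dom_dom C HC) as dd. pose proof (cat_cod_cod C HC) as cc.
  pose proof (cat_comp_dom C HC) as compd. pose proof (cat_comp_cod C HC) as compc.
  pose proof (cat_id_r C HC) as idr. pose proof (cat_id_l C HC) as idl.
  split.
  - intros a x H; exact H.
  - intros a b H1 H2. oext. split; [exact (H1 x)|exact (H2 x)].
  - intros a b c H1 H2 x Hx. exact (H2 x (H1 x Hx)).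
  - intros S a Ha x Hx. rsp. exists a. auto.
  - intros S b H x. rsp. intros [U [HU Hx]]. exact (H U HU x Hx).
  - intros a b x. rsp. intros [H _]; exact H.
  - intros a b x. rsp. intros [_ H]; exact H.
  - intros a b c H1 H2 x Hx. rsp. auto.
  - intros a S. oext. rsp. split.
    + intros [Ha [U [HU Hx]]]. exists (@rmeet (Omega C) a U). split; [exists U; auto|]. rsp. auto.
    + intros [W [[U [HU <-]] Hx]]. rewrite (meet_spec C) in Hx. destruct Hx. split; [auto|exists U; auto].
  - intros a b c. oext. rsp. split.
    + intros [w [z [[u [v [Hu [Hv [E1 ->]]]]] [Hz [E2 ->]]]]].
      rewrite compd in E2 by exact E1.
      exists u, (comp v z). split; [exact Hu|split; [exists v, z; auto|split]].
      * rewrite compc by exact E2. exact E1.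
      * apply (cat_assoc C HC); auto.
    + intros [u [w [Hu [[v [z [Hv [Hz [E2 ->]]]]] [E1 ->]]]]].
      rewrite compc in E1 by exact E2.
      exists (comp u v), z. split; [exists u, v; auto|split; [exact Hz|split]].
      * rewrite compd by exact E1. exact E2.
      * symmetry. apply (cat_assoc C HC); auto.
  - intro a. oext. rsp. split.
    + intros [u [v [Hu [Hv [E ->]]]]]. unfold ids in Hu. rewrite Hu in E. subst u. rewrite idl. exact Hv.
    + intro H. exists (cod x), x. split; [unfold ids; apply dc|split; [exact H|split; [apply dc|symmetry; apply idl]]].
  - intro a. oext. rsp. split.
    + intros [u [v [Hu [Hv [E ->]]]]]. pose proof (id_cod C HC v Hv) as K. rewrite K in E. subst v. rewrite idr. exact Hu.
    + intro H. exists x, (dom x). split; [exact H|split; [unfold ids; apply dd|split; [symmetry; apply cd|symmetry; apply idr]]].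
  - intros a S. oext. rsp. split.
    + intros [u [v [Hu [[U [HU Hv]] [E ->]]]]]. exists (@rmul (Omega C) a U). split; [exists U; auto|].
      rsp. exists u, v. auto.
    + intros [W [[U [HU <-]] Hx]]. rewrite (mul_spec C HC) in Hx. destruct Hx as [u [v [Hu [Hv [E ->]]]]].
      exists u, v. split; [exact Hu|split; [exists U; auto|auto]].
  - intros a S. oext. rsp. split.
    + intros [u [v [[U [HU Hu]] [Hv [E ->]]]]]. exists (@rmul (Omega C) U a). split; [exists U; auto|].
      rsp. exists u, v. auto.
    + intros [W [[U [HU <-]] Hx]]. rewrite (mul_spec C HC) in Hx. destruct Hx as [u [v [Hu [Hv [E ->]]]]].
      exists u, v. split; [exists U; auto|auto].
  - intro S. oext. rsp. split.
    + intros [y [[U [HU Hy]] <-]]. exists (@rstar (Omega C) U). split; [exists U; auto|]. rsp. exists y; auto.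
    + intros [W [[U [HU <-]] Hx]]. rewrite (star_spec C HC) in Hx. destruct Hx as [y [Hy <-]].
      exists y. split; [exists U; auto|reflexivity].
  - intro S. oext. rsp. split.
    + intros [y [[U [HU Hy]] <-]]. exists (@rplus (Omega C) U). split; [exists U; auto|]. rsp. exists y; auto.
    + intros [W [[U [HU <-]] Hx]]. rewrite (plus_spec C HC) in Hx. destruct Hx as [y [Hy <-]].
      exists y. split; [exists U; auto|reflexivity].
  - intros a x. unfold projection. hnf. rsp. intros [y [_ <-]]. unfold ids. apply dd.
  - intros a x. unfold projection. hnf. rsp. intros [y [_ <-]]. unfold ids. apply dc.
  - intros a Ha. unfold projection in Ha. hnf in Ha. rewrite (e_spec C HC) in Ha. oext. rsp. split.
    + intros [y [Hy <-]]. rewrite (Ha y Hy). exact Hy.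
    + intro H. exists x. split; [exact H|apply (Ha x H)].
  - intros a Ha. unfold projection in Ha. hnf in Ha. rewrite (e_spec C HC) in Ha. oext. rsp. split.
    + intros [y [Hy <-]]. rewrite (id_cod C HC y (Ha y Hy)). exact Hy.
    + intro H. exists x. split; [exact H|apply (id_cod C HC x (Ha x H))].
  - intros a b Ha Hb. unfold projection in *. hnf in Ha; hnf in Hb. rewrite (e_spec C HC) in *.
    intro x. rsp. intro H. apply (prod_ids C HC) in H; auto. apply Ha. apply H.
  - intros a b Ha Hb. unfold projection in *. hnf in Ha; hnf in Hb. rewrite (e_spec C HC) in *.
    oext. rsp. rewrite (prod_ids C HC), (prod_ids C HC); auto. tauto.
  - intros a Ha. unfold projection in *. hnf in Ha. rewrite (e_spec C HC) in *.
    oext. rsp. rewrite (prod_ids C HC); auto. tauto.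
  - intro a. oext. rsp. split.
    + intros [u [v [Hu [[y [Hy <-]] [E ->]]]]]. rewrite cd in E.
      rewrite <- E. rewrite idr. exact Hu.
    + intro H. exists x, (dom x). split; [exact H|split; [exists x; auto|split; [symmetry; apply cd|symmetry; apply idr]]].
  - intro a. oext. rsp. split.
    + intros [u [v [[y [Hy <-]] [Hv [E ->]]]]]. rewrite dc in E. rewrite E. rewrite idl. exact Hv.
    + intro H. exists (cod x), x. split; [exists x; auto|split; [exact H|split; [apply dc|symmetry; apply idl]]].
  - intros a b. oext. rsp. split.
    + intros [z [[u [v [Hu [Hv [E ->]]]]] <-]]. exists (comp (dom u) v). split.
      * exists (dom u), v. split; [exists u; auto|split; [exact Hv|split; [rewrite dd; exact E|reflexivity]]].
      * rewrite !compd; auto. rewrite dd; exact E.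
    + intros [z [[w [v [[u [Hu <-]] [Hv [E ->]]]]] <-]]. rewrite dd in E. exists (comp u v). split.
      * exists u, v. auto.
      * rewrite !compd; auto. rewrite dd; exact E.
  - intros a b. oext. rsp. split.
    + intros [z [[u [v [Hu [Hv [E ->]]]]] <-]]. exists (comp u (cod v)). split.
      * exists u, (cod v). split; [exact Hu|split; [exists v; auto|split; [rewrite cc; exact E|reflexivity]]].
      * rewrite !compc; auto. rewrite cc; exact E.
    + intros [z [[u [w [Hu [[v [Hv <-]] [E ->]]]]] <-]]. rewrite cc in E. exists (comp u v). split.
      * exists u, v. auto.
      * rewrite !compc; auto. rewrite cc; exact E.
  - exists (fun U : Opens C => bisection C (proj1_sig U)). split.
    + intros a Ha. apply (bisec_pi C HC a Ha).
    + apply opens_ext. intro x. fold (rtop (Omega C)). rewrite (top_spec C), (sup_spec C). split; [auto|].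
      intros _. destruct (dom_lh C HC x) as [U1 [HU1 [U1x [Inj1 _]]]].
      destruct (cod_lh C HC x) as [U2 [HU2 [U2x [Inj2 _]]]].
      exists (exist _ (fun z => U1 z /\ U2 z) (open_inter C _ _ HU1 HU2)). simpl. split; [|auto].
      split; intros y z [Hy1 Hy2] [Hz1 Hz2] E; auto.
  - intros a b Ha Hb. apply (bisec_pi C HC). rewrite (mul_spec C HC).
    apply (pi_bisec C HC) in Ha. apply (pi_bisec C HC) in Hb. destruct Ha as [Ia Ja], Hb as [Ib Jb].
    split.
    + intros y z [u [v [Hu [Hv [E ->]]]]] [u' [v' [Hu' [Hv' [E' ->]]]]] D.
      rewrite !compd in D by auto. assert (v = v') by (apply Ib; auto). subst v'.
      rewrite <- E' in E. assert (u = u') by (apply Ia; auto). subst. reflexivity.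
    + intros y z [u [v [Hu [Hv [E ->]]]]] [u' [v' [Hu' [Hv' [E' ->]]]]] D.
      rewrite !compc in D by auto. assert (u = u') by (apply Ja; auto). subst u'.
      rewrite E' in E. assert (v = v') by (apply Jb; auto). subst. reflexivity.
Qed.

End OM2.

End F.
Import F.

Module G.

Section P2.
Context (C C' : topcat) (th : C' -> C) (HC : etale C) (HC' : etale C') (Hth : covering th).

Lemma th_ids (x : C') : ids C (th x) -> ids C' x.
Proof.
  intro H. unfold ids in *. apply (f_dinj th Hth).
  - rewrite (f_dom th Hth). exact H.
  - apply (cat_dom_dom C' HC').
Qed.

Lemma part2 : exists f : Omega C -> Omega C', rqf_morphism f /\
       forall U, set_eq (proj1_sig (f U)) (preimage th (proj1_sig U)).
Proof.
  set (f := fun U : Opens C => exist _ (preimage th (proj1_sig U)) (f_cont th Hth _ (proj2_sig U)) : Opens C').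
  assert (fs : forall U, proj1_sig (f U) = preimage th (proj1_sig U)) by reflexivity.
  exists f. split; [|intros U x; rewrite fs; reflexivity].
  split.
  - intros a b. apply opens_ext. intro x. rewrite !fs. unfold preimage.
    rewrite (mul_spec C HC), (mul_spec C' HC'). simpl. split.
    + intros [u [v [Hu [Hv [E Ex]]]]].
      destruct (f_rsurj th Hth (cod x) u) as [x1 [E1 T1]].
      { unfold ids. apply (cat_dom_cod C' HC'). }
      { rewrite (f_cod th Hth), Ex, (cat_comp_cod C HC) by exact E. reflexivity. }
      destruct (f_rsurj th Hth (dom x1) v) as [x2 [E2 T2]].
      { unfold ids. apply (cat_dom_dom C' HC'). }
      { rewrite (f_dom th Hth), T1. exact E. }
      exists x1, x2. split; [unfold preimage; rewrite T1; exact Hu|split; [unfold preimage; rewrite T2; exact Hv|split; [symmetry; exact E2|]]].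
      symmetry. apply (f_rinj th Hth).
      * rewrite (f_comp th Hth) by (symmetry; exact E2). rewrite T1, T2. symmetry; exact Ex.
      * rewrite (cat_comp_cod C' HC') by (symmetry; exact E2). exact E1.
    + intros [u [v [Hu [Hv [E ->]]]]]. exists (th u), (th v). split; [exact Hu|split; [exact Hv|split]].
      * rewrite <- (f_dom th Hth), <- (f_cod th Hth), E. reflexivity.
      * apply (f_comp th Hth); exact E.
  - intro S. apply opens_ext. intro x. rewrite !fs. unfold preimage.
    rewrite (sup_spec C), (sup_spec C'). split.
    + intros [U [HU Hx]]. exists (f U). split; [exists U; auto|exact Hx].
    + intros [W [[U [HU <-]] Hx]]. exists U. auto.
  - intros a b. apply opens_ext. intro x. rewrite !fs. unfold preimage.
    rewrite (meet_spec C), (meet_spec C'). reflexivity.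
  - intro a. apply opens_ext. intro x. rewrite !fs. unfold preimage.
    rewrite (star_spec C HC), (star_spec C' HC'). split.
    + intros [u [Hu Eu]]. assert (Ix : ids C' x).
      { apply th_ids. unfold ids. rewrite <- Eu. apply (cat_dom_dom C HC). }
      destruct (f_dsurj th Hth x u Ix (eq_sym Eu)) as [y [Ey Ty]].
      exists y. split; [rewrite fs; unfold preimage; rewrite Ty; exact Hu|exact Ey].
    + intros [y [Hy <-]]. exists (th y). split; [exact Hy|]. symmetry; apply (f_dom th Hth).
  - intro a. apply opens_ext. intro x. rewrite !fs. unfold preimage.
    rewrite (plus_spec C HC), (plus_spec C' HC'). split.
    + intros [u [Hu Eu]]. assert (Ix : ids C' x).
      { apply th_ids. unfold ids. rewrite <- Eu. apply (cat_dom_cod C HC). }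
      destruct (f_rsurj th Hth x u Ix (eq_sym Eu)) as [y [Ey Ty]].
      exists y. split; [rewrite fs; unfold preimage; rewrite Ty; exact Hu|exact Ey].
    + intros [y [Hy <-]]. exists (th y). split; [exact Hy|]. symmetry; apply (f_cod th Hth).
  - apply opens_ext. intro x. rewrite !fs. unfold preimage.
    rewrite (top_spec C), (top_spec C'). tauto.
  - apply opens_ext. intro x. rewrite !fs. unfold preimage.
    rewrite (e_spec C HC), (e_spec C' HC'). split.
    + apply th_ids.
    + unfold ids. intro H. rewrite <- (f_dom th Hth), H. reflexivity.
  - intros a Ha. apply (bisec_pi C' HC'). apply (pi_bisec C HC) in Ha. destruct Ha as [I J]. split.
    + intros y z Hy Hz E. apply (f_dinj th Hth); [|exact E]. apply I; auto.
      rewrite <- !(f_dom th Hth), E. reflexivity.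
    + intros y z Hy Hz E. apply (f_rinj th Hth); [|exact E]. apply J; auto.
      rewrite <- !(f_cod th Hth), E. reflexivity.
Qed.
End P2.

End G.
Import G.

Module H.

Lemma morph_op (Q Q' : rqf_ops) (ph : Q' -> Q) : rqf_morphism ph -> @rqf_morphism (opQ Q') (opQ Q) ph.
Proof.
  intro H. destruct H. split; simpl; auto.
  intros a Ha. apply pi_op. apply pi_op in Ha. auto.
Qed.

Section MOR.
Context (Q Q' : rqf_ops) (ph : Q' -> Q) (HQ : rqf_axioms Q) (HQ' : rqf_axioms Q') (Hph : rqf_morphism ph).

Lemma ph_mono a b : rle a b -> rle (ph a) (ph b).
Proof.
  intro H. assert (E : rmeet a b = a) by (apply (A.lanti Q' HQ'); [apply (A.mlb1 Q' HQ')|apply (A.mglb Q' HQ'); [apply (A.lrefl Q' HQ')|exact H]]).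
  rewrite <- E, (m_meet ph Hph). apply (A.mlb2 Q HQ).
Qed.

Lemma ph_bot : ph (rbot Q') = rbot Q.
Proof. unfold rbot. rewrite (m_sup ph Hph), A.img_empty. reflexivity. Qed.

Lemma pre_cp A : cpfilter Q A -> cpfilter Q' (preimage ph A).
Proof.
  intro HA. unfold preimage. split; [|split; [|split; [|split]]].
  - exists (rtop Q'). rewrite (m_top ph Hph). apply (cp_top Q HQ A HA).
  - intros a b Ha H. apply (cp_up Q A HA (ph a)); [exact Ha|apply ph_mono; exact H].
  - intros a b Ha Hb. rewrite (m_meet ph Hph). apply (cp_meet Q A HA); assumption.
  - rewrite ph_bot. apply (cp_nbot Q A HA).
  - intros S H. rewrite (m_sup ph Hph) in H. destruct (cp_prime Q A HA _ H) as [y [[s [Hs <-]] Hy]].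
    exists s. auto.
Qed.

Lemma pre_dom A : cpfilter Q A -> forall b, up_star Q A (ph b) <-> up_star Q' (preimage ph A) b.
Proof.
  intros HA b. split.
  - intros [a [Ha H]].
    destruct (cp_has_PI Q' HQ' _ (pre_cp A HA)) as [s [Ps Hs]].
    set (cq := rmeet b re).
    exists (rmul s cq). split.
    + unfold preimage. rewrite (m_mul ph Hph). apply (AP Q HQ); [exact HA|exact Hs|].
      exists a. split; [exact Ha|]. unfold cq. rewrite (m_meet ph Hph), (m_e ph Hph).
      apply (A.mglb Q HQ); [exact H|apply (A.star_proj' Q HQ)].
    + assert (Pc : projection Q' cq) by apply (A.mlb2 Q' HQ').
      rewrite (star_mul Q' HQ'), (star_fix Q' HQ').
      * apply (A.ltrans Q' HQ') with cq; [apply (A.proj_le_r Q' HQ'); apply (A.star_proj' Q' HQ')|apply (A.mlb1 Q' HQ')].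
      * apply (proj_mul_closed Q' HQ'); [apply (A.star_proj' Q' HQ')|exact Pc].
  - intros [c [Hc H]]. exists (ph c). split; [exact Hc|]. rewrite <- (m_star ph Hph). apply ph_mono; exact H.
Qed.

Lemma pre_comp A B : cpfilter Q A -> cpfilter Q B -> (forall x, up_star Q A x <-> up_plus Q B x) ->
  forall c, pset Q A B (ph c) <-> pset Q' (preimage ph A) (preimage ph B) c.
Proof.
  intros HA HB E c. split.
  - intro H. pose proof (C1 Q HQ A B HA HB E) as HAB.
    destruct (cp_has_PI Q' HQ' _ (pre_cp A HA)) as [s [Ps Hs]].
    destruct (cp_has_PI Q' HQ' _ (pre_cp B HB)) as [t [Pt Ht]].
    set (c' := rmeet c (rmul s t)).
    assert (Hc' : pset Q A B (ph c')).
    { unfold c'. rewrite (m_meet ph Hph), (m_mul ph Hph). apply (cp_meet Q _ HAB); [exact H|].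
      exists (ph s), (ph t). split; [exact Hs|split; [exact Ht|apply (A.lrefl Q HQ)]]. }
    assert (Pst : partial_isometry Q' (rmul s t)) by (apply (pi_mul Q' HQ'); assumption).
    assert (Ec : c' = rmul (rmul (rplus c') s) t).
    { rewrite (mul_assoc Q' HQ'). apply pi_l; [exact Pst|apply (A.mlb2 Q' HQ')]. }
    exists (rmul (rplus c') s), t. split; [|split; [exact Ht|]].
    + unfold preimage. rewrite (m_mul ph Hph), (m_plus ph Hph). apply (APp Q HQ); [exact HA|exact Hs|].
      apply (C3 Q HQ A B HA HB E). exists (ph c'). split; [exact Hc'|apply (A.lrefl Q HQ)].
    + rewrite <- Ec. apply (A.mlb1 Q' HQ').
  - intros [a [b [Ha [Hb H]]]]. exists (ph a), (ph b). split; [exact Ha|split; [exact Hb|]].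
    rewrite <- (m_mul ph Hph). apply ph_mono; exact H.
Qed.

End MOR.

Lemma pre_cod (Q Q' : rqf_ops) (ph : Q' -> Q) (HQ : rqf_axioms Q) (HQ' : rqf_axioms Q') (Hph : rqf_morphism ph) A :
  cpfilter Q A -> forall b, up_plus Q A (ph b) <-> up_plus Q' (preimage ph A) b.
Proof. exact (pre_dom (opQ Q) (opQ Q') ph (op_axioms Q HQ) (op_axioms Q' HQ') (morph_op Q Q' ph Hph) A). Qed.

Section P4.
Context (Q Q' : rqf_ops) (ph : Q' -> Q) (HQ : rqf_axioms Q) (HQ' : rqf_axioms Q') (Hph : rqf_morphism ph).

Lemma part4 : exists g : CQ Q -> CQ Q', covering g /\
       forall A, set_eq (proj1_sig (g A)) (preimage ph (proj1_sig A)).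
Proof.
  set (g := fun A : Filt Q => exist _ (preimage ph (proj1_sig A)) (pre_cp Q Q' ph HQ HQ' Hph _ (fcp Q A)) : Filt Q').
  assert (gs : forall A, proj1_sig (g A) = preimage ph (proj1_sig A)) by reflexivity.
  assert (gd : forall x : Filt Q, g (filt_dom Q x) = filt_dom Q' (g x)).
  { intro x. apply filt_ext. intro a. rewrite gs, (dom_spec Q' HQ'), gs. unfold preimage at 1.
    rewrite (dom_spec Q HQ). apply (pre_dom Q Q' ph HQ HQ' Hph). apply fcp. }
  assert (gc : forall x : Filt Q, g (filt_cod Q x) = filt_cod Q' (g x)).
  { intro x. apply filt_ext. intro a. rewrite gs, (cod_spec Q' HQ'), gs. unfold preimage at 1.
    rewrite (cod_spec Q HQ). apply (pre_cod Q Q' ph HQ HQ' Hph). apply fcp. }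
  exists g. split; [|intros A x; rewrite gs; reflexivity].
  split; simpl.
  - exact gd.
  - exact gc.
  - intros x y Hxy. assert (H' : filt_dom Q' (g x) = filt_cod Q' (g y)) by (rewrite <- gd, <- gc, Hxy; reflexivity).
    apply (composable_iff Q HQ) in Hxy. apply (composable_iff Q' HQ') in H'.
    apply filt_ext. intro c. rewrite gs. unfold preimage. rewrite (comp_spec Q HQ _ _ Hxy), (comp_spec Q' HQ' _ _ H').
    rewrite !gs. apply (pre_comp Q Q' ph HQ HQ' Hph); [apply fcp|apply fcp|exact Hxy].
  - intros V HV. apply (cont_into Q' (CQ Q) g); [|exact HV].
    intros a _. simpl. exact (G3 Q HQ (ph a)).
  - intros x y E1 E2. apply filt_ext.
    destruct (cp_has_PI Q' HQ' _ (fcp Q' (g x))) as [s [Ps Hs]].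
    assert (Hs' : proj1_sig (g y) s) by (rewrite <- E1; exact Hs).
    apply (L1' Q HQ) with (ph s); [apply fcp|apply fcp|apply (m_pi ph Hph); exact Ps|exact Hs|exact Hs'|].
    intro b. rewrite <- !(dom_spec Q HQ), E2. reflexivity.
  - intros x y E1 E2. apply filt_ext.
    destruct (cp_has_PI Q' HQ' _ (fcp Q' (g x))) as [s [Ps Hs]].
    assert (Hs' : proj1_sig (g y) s) by (rewrite <- E1; exact Hs).
    apply (L1p' Q HQ) with (ph s); [apply fcp|apply fcp|apply (m_pi ph Hph); exact Ps|exact Hs|exact Hs'|].
    intro b. rewrite <- !(cod_spec Q HQ), E2. reflexivity.
  - intros e y Ie Ey. apply (ids_iff Q HQ) in Ie.
    destruct (cp_has_PI Q' HQ' _ (fcp Q' y)) as [s [Ps Hs]].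
    assert (Hse : proj1_sig e (rstar (ph s))).
    { rewrite <- (m_star ph Hph). change (proj1_sig (g e) (rstar s)). rewrite Ey, (dom_spec Q' HQ').
      exists s. split; [exact Hs|apply (A.lrefl Q' HQ')]. }
    destruct (L2 Q HQ (ph s) (proj1_sig e) (m_pi ph Hph s Ps) (fcp Q e) Ie Hse) as [K1 [K2 K3]].
    exists (exist _ (lft Q (ph s) (proj1_sig e)) K1). split.
    + apply filt_ext. intro c. rewrite (dom_spec Q HQ). apply K2.
    + apply filt_ext. apply (L1' Q' HQ') with s; [apply fcp|apply fcp|exact Ps|exact K3|exact Hs|].
      intro b. rewrite gs. cbn [proj1_sig]. rewrite <- (pre_dom Q Q' ph HQ HQ' Hph _ K1 b). rewrite K2.
      rewrite <- (dom_spec Q' HQ' y), <- Ey, gs. reflexivity.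
  - intros e y Ie Ey. apply (ids_iff Q HQ) in Ie.
    destruct (cp_has_PI Q' HQ' _ (fcp Q' y)) as [s [Ps Hs]].
    assert (Hse : proj1_sig e (rplus (ph s))).
    { rewrite <- (m_plus ph Hph). change (proj1_sig (g e) (rplus s)). rewrite Ey, (cod_spec Q' HQ').
      exists s. split; [exact Hs|apply (A.lrefl Q' HQ')]. }
    destruct (L2p Q HQ (ph s) (proj1_sig e) (m_pi ph Hph s Ps) (fcp Q e) Ie Hse) as [K1 [K2 K3]].
    exists (exist _ (lftp Q (ph s) (proj1_sig e)) K1). split.
    + apply filt_ext. intro c. rewrite (cod_spec Q HQ). apply K2.
    + apply filt_ext. apply (L1p' Q' HQ') with s; [apply fcp|apply fcp|exact Ps|exact K3|exact Hs|].
      intro b. rewrite gs. cbn [proj1_sig]. rewrite <- (pre_cod Q Q' ph HQ HQ' Hph _ K1 b). rewrite K2.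
      rewrite <- (cod_spec Q' HQ' y), <- Ey, gs. reflexivity.
Qed.
End P4.

End H.
Import H.

Module I.

Section FAC.
Context (Q : rqf_ops) (HQ : rqf_axioms Q).

Lemma factor (Xf : Filt Q) a b : proj1_sig Xf (rmul a b) ->
  exists A B : Filt Q, proj1_sig A a /\ proj1_sig B b /\ filt_dom Q A = filt_cod Q B /\ filt_comp Q A B = Xf.
Proof.
  intro H. pose proof (fcp Q Xf) as HX.
  rewrite (a_sup_PI Q HQ a), (mul_sup_r Q HQ) in H.
  destruct (cp_prime Q _ HX _ H) as [y [[a' [[Pa' Ha'] <-]] H1]].
  rewrite (a_sup_PI Q HQ b), (mul_sup_l Q HQ) in H1.
  destruct (cp_prime Q _ HX _ H1) as [y [[b' [[Pb' Hb'] <-]] H2]].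
  set (F := up_star Q (proj1_sig Xf)).
  assert (HF : cpfilter Q F) by (apply D1; assumption).
  assert (Fe : F re) by (apply E2; assumption).
  assert (Fab : F (rstar (rmul a' b'))) by (exists (rmul a' b'); split; [exact H2|apply (A.lrefl Q HQ)]).
  assert (Fb : F (rstar b')).
  { apply (cp_up Q F HF _ _ Fab). rewrite (star_mul Q HQ). apply (A.star_mono Q HQ).
    apply (A.proj_le_r Q HQ). apply (A.star_proj' Q HQ). }
  destruct (L2 Q HQ b' F Pb' HF Fe Fb) as [K1 [K2 K3]].
  set (G := up_plus Q (lft Q b' F)).
  assert (HG : cpfilter Q G) by (apply D1p; assumption).
  assert (Ge : G re) by (apply E2p; assumption).
  assert (Ga : G (rstar a')).
  { exists (rmul b' (rstar (rmul a' b'))). split.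
    - exists (rstar (rmul a' b')). split; [exact Fab|apply (A.lrefl Q HQ)].
    - rewrite (star_mul Q HQ), <- (pi_r Q b' (rmul (rstar a') b')); [|exact Pb'|].
      + rewrite (plus_mul_r Q HQ), (plus_fix Q HQ).
        * apply (A.proj_le_l Q HQ). apply (A.plus_proj' Q HQ).
        * apply (proj_mul_closed Q HQ); [apply (A.star_proj' Q HQ)|apply (A.plus_proj' Q HQ)].
      + apply (A.proj_le_r Q HQ). apply (A.star_proj' Q HQ). }
  destruct (L2 Q HQ a' G Pa' HG Ge Ga) as [J1 [J2 J3]].
  set (Af := exist _ (lft Q a' G) J1 : Filt Q).
  set (Bf := exist _ (lft Q b' F) K1 : Filt Q).
  assert (Hc : composable Q Af Bf).
  { intro x. simpl. rewrite J2. reflexivity. }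
  exists Af, Bf. split; [|split; [|split]].
  - apply (cp_up Q _ J1 a'); [exact J3|exact Ha'].
  - apply (cp_up Q _ K1 b'); [exact K3|exact Hb'].
  - apply (composable_iff Q HQ). exact Hc.
  - apply filt_ext. rewrite (comp_spec Q HQ _ _ Hc).
    apply (L1' Q HQ) with (rmul a' b'); [apply C1; [exact HQ|exact J1|exact K1|exact Hc]|exact HX|
      apply (pi_mul Q HQ); assumption| |exact H2|].
    + exists a', b'. split; [exact J3|split; [exact K3|apply (A.lrefl Q HQ)]].
    + intro x. cbn [proj1_sig Af Bf]. rewrite (C2 Q HQ _ _ J1 K1 Hc). rewrite K2. reflexivity.
Qed.
End FAC.

Lemma dom_specC (Q : rqf_ops) (HQ : rqf_axioms Q) (A : CQ Q) : proj1_sig (@dom (CQ Q) A) = up_star Q (proj1_sig A).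
Proof. exact (dom_spec Q HQ A). Qed.
Lemma cod_specC (Q : rqf_ops) (HQ : rqf_axioms Q) (A : CQ Q) : proj1_sig (@cod (CQ Q) A) = up_plus Q (proj1_sig A).
Proof. exact (cod_spec Q HQ A). Qed.

Section P5a.
Context (C : topcat) (Q : rqf_ops) (HC : etale C) (HQ : rqf_axioms Q) (al : C -> CQ Q) (Hal : covering al).

Lemma al_ids (x : C) : proj1_sig (al x) re <-> ids C x.
Proof.
  split.
  - intro H. apply (ids_iff Q HQ) in H. unfold ids in *. apply (f_dinj al Hal).
    + rewrite (f_dom al Hal). exact H.
    + apply (cat_dom_dom C HC).
  - intro H. apply (ids_iff Q HQ). unfold ids in *. rewrite <- (f_dom al Hal), H. reflexivity.
Qed.

Lemma part5a : exists! be : Q -> Omega C, rqf_morphism be /\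
          forall a, set_eq (proj1_sig (be a)) (preimage al (chi Q a)).
Proof.
  pose proof (CQ_etale Q HQ) as HCQ.
  set (be := fun a : Q => exist _ (preimage al (chi Q a)) (f_cont al Hal _ (G3 Q HQ a)) : Opens C).
  assert (bs : forall a, proj1_sig (be a) = preimage al (chi Q a)) by reflexivity.
  exists be. split.
  2:{ intros be' [_ E]. apply functional_extensionality. intro a. apply opens_ext. intro x.
      rewrite bs. symmetry. apply E. }
  split; [split|intros a x; rewrite bs; reflexivity].
  - intros a b. apply opens_ext. intro x. rewrite (mul_spec C HC), !bs. unfold preimage, chi. split.
    + intro H. destruct (factor Q HQ (al x) a b H) as [A [B [Ha [Hb [Ecomp Ex]]]]].
      destruct (f_rsurj al Hal (cod x) A) as [u [Eu Tu]].
      { unfold ids. apply (cat_dom_cod C HC). }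
      { rewrite (f_cod al Hal), <- Ex. apply (cat_comp_cod (CQ Q) HCQ). exact Ecomp. }
      destruct (f_rsurj al Hal (dom u) B) as [v [Ev Tv]].
      { unfold ids. apply (cat_dom_dom C HC). }
      { rewrite (f_dom al Hal), Tu. exact Ecomp. }
      exists u, v. split; [unfold preimage, chi; rewrite Tu; exact Ha|].
      split; [unfold preimage, chi; rewrite Tv; exact Hb|split; [symmetry; exact Ev|]].
      symmetry. apply (f_rinj al Hal).
      * rewrite (f_comp al Hal) by (symmetry; exact Ev). rewrite Tu, Tv. exact Ex.
      * rewrite (cat_comp_cod C HC) by (symmetry; exact Ev). exact Eu.
    + intros [u [v [Hu [Hv [E ->]]]]]. unfold preimage, chi in Hu, Hv.
      assert (E' : @dom (CQ Q) (al u) = @cod (CQ Q) (al v)) by (rewrite <- (f_dom al Hal), <- (f_cod al Hal), E; reflexivity).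
      rewrite (f_comp al Hal) by exact E. simpl. apply (composable_iff Q HQ) in E'.
      rewrite (comp_spec Q HQ _ _ E'). exists a, b. split; [exact Hu|split; [exact Hv|apply (A.lrefl Q HQ)]].
  - intro S. apply opens_ext. intro x. rewrite (sup_spec C), bs. unfold preimage, chi. split.
    + intro H. destruct (cp_prime Q _ (fcp Q (al x)) _ H) as [s [Hs Hx]]. exists (be s).
      split; [exists s; auto|exact Hx].
    + intros [U [[s [Hs <-]] Hx]]. rewrite bs in Hx. apply (fup Q (al x) s); [exact Hx|].
      apply (sup_ub Q HQ). exact Hs.
  - intros a b. apply opens_ext. intro x. rewrite (meet_spec C), !bs. unfold preimage, chi. split.
    + intro H. split; eapply (fup Q); [exact H|apply (A.mlb1 Q HQ)|exact H|apply (A.mlb2 Q HQ)].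
    + intros [H1 H2]. apply (fmeet Q (al x)); assumption.
  - intro a. apply opens_ext. intro x. rewrite (star_spec C HC), !bs. unfold preimage, chi. split.
    + intro H. destruct (cp_star_PI Q HQ _ a (fcp Q (al x)) H) as [b [Pb [Hba Hb]]].
      assert (Ie : proj1_sig (al x) re) by (apply (fup Q (al x) (rstar b)); [exact Hb|apply (A.star_proj' Q HQ)]).
      destruct (L2 Q HQ b _ Pb (fcp Q (al x)) Ie Hb) as [K1 [K2 K3]].
      destruct (f_dsurj al Hal x (exist _ (lft Q b (proj1_sig (al x))) K1)) as [y [Ey Ty]].
      { apply al_ids; exact Ie. }
      { apply filt_ext. intro c. rewrite (dom_specC Q HQ). cbn [proj1_sig]. symmetry. apply K2. }
      exists y. split; [|exact Ey]. unfold preimage, chi. rewrite Ty. cbn [proj1_sig].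
      apply (cp_up Q _ K1 b); [exact K3|exact Hba].
    + intros [y [Hy <-]]. unfold preimage, chi in Hy. rewrite (f_dom al Hal), (dom_specC Q HQ).
      exists a. split; [exact Hy|apply (A.lrefl Q HQ)].
  - intro a. apply opens_ext. intro x. rewrite (plus_spec C HC), !bs. unfold preimage, chi. split.
    + intro H. destruct (cp_plus_PI Q HQ _ a (fcp Q (al x)) H) as [b [Pb [Hba Hb]]].
      assert (Ie : proj1_sig (al x) re) by (apply (fup Q (al x) (rplus b)); [exact Hb|apply (A.plus_proj' Q HQ)]).
      destruct (L2p Q HQ b _ Pb (fcp Q (al x)) Ie Hb) as [K1 [K2 K3]].
      destruct (f_rsurj al Hal x (exist _ (lftp Q b (proj1_sig (al x))) K1)) as [y [Ey Ty]].
      { apply al_ids; exact Ie. }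
      { apply filt_ext. intro c. rewrite (cod_specC Q HQ). cbn [proj1_sig]. symmetry. apply K2. }
      exists y. split; [|exact Ey]. unfold preimage, chi. rewrite Ty. cbn [proj1_sig].
      apply (cp_up Q _ K1 b); [exact K3|exact Hba].
    + intros [y [Hy <-]]. unfold preimage, chi in Hy. rewrite (f_cod al Hal), (cod_specC Q HQ).
      exists a. split; [exact Hy|apply (A.lrefl Q HQ)].
  - apply opens_ext. intro x. rewrite (top_spec C), bs. unfold preimage, chi. split; [auto|].
    intros _. apply (cp_top Q HQ _ (fcp Q (al x))).
  - apply opens_ext. intro x. rewrite (e_spec C HC), bs. unfold preimage, chi. apply al_ids.
  - intros a Pa. apply (bisec_pi C HC). rewrite bs. unfold preimage, chi. split.
    + intros y z Hy Hz E. apply (f_dinj al Hal); [|exact E]. apply filt_ext.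
      apply (L1' Q HQ) with a; [apply fcp|apply fcp|exact Pa|exact Hy|exact Hz|].
      intro b. rewrite <- !(dom_specC Q HQ), <- !(f_dom al Hal), E. reflexivity.
    + intros y z Hy Hz E. apply (f_rinj al Hal); [|exact E]. apply filt_ext.
      apply (L1p' Q HQ) with a; [apply fcp|apply fcp|exact Pa|exact Hy|exact Hz|].
      intro b. rewrite <- !(cod_specC Q HQ), <- !(f_cod al Hal), E. reflexivity.
Qed.
End P5a.

End I.
Import I.

Module J.

Section P5b.
Context (C : topcat) (Q : rqf_ops) (HC : etale C) (HQ : rqf_axioms Q) (be : Q -> Omega C) (Hbe : rqf_morphism be).

Lemma be_meet a b x : proj1_sig (be (rmeet a b)) x <-> proj1_sig (be a) x /\ proj1_sig (be b) x.
Proof. rewrite (m_meet be Hbe), (meet_spec C). reflexivity. Qed.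

Lemma be_mono a b x : rle a b -> proj1_sig (be a) x -> proj1_sig (be b) x.
Proof.
  intros H Hx. assert (E : rmeet a b = a) by (apply (A.lanti Q HQ); [apply (A.mlb1 Q HQ)|apply (A.mglb Q HQ); [apply (A.lrefl Q HQ)|exact H]]).
  rewrite <- E in Hx. apply be_meet in Hx. apply Hx.
Qed.

Lemma be_top x : proj1_sig (be (rtop Q)) x.
Proof. rewrite (m_top be Hbe), (top_spec C). exact I. Qed.

Lemma be_sup S x : proj1_sig (be (rsup S)) x <-> exists s, S s /\ proj1_sig (be s) x.
Proof.
  rewrite (m_sup be Hbe), (sup_spec C). split.
  - intros [U [[s [Hs <-]] Hx]]. eauto.
  - intros [s [Hs Hx]]. exists (be s). split; [exists s; auto|exact Hx].
Qed.

Lemma be_star a : proj1_sig (be (rstar a)) = image dom (proj1_sig (be a)).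
Proof. rewrite (m_star be Hbe). apply (star_spec C HC). Qed.
Lemma be_plus a : proj1_sig (be (rplus a)) = image cod (proj1_sig (be a)).
Proof. rewrite (m_plus be Hbe). apply (plus_spec C HC). Qed.
Lemma be_mul a b : proj1_sig (be (rmul a b)) = prodset C (proj1_sig (be a)) (proj1_sig (be b)).
Proof. rewrite (m_mul be Hbe). apply (mul_spec C HC). Qed.
Lemma be_e : proj1_sig (be re) = ids C.
Proof. rewrite (m_e be Hbe). apply (e_spec C HC). Qed.

Lemma be_cover x : exists s, partial_isometry Q s /\ proj1_sig (be s) x.
Proof.
  destruct (top_pi_join Q HQ) as [S [H1 H2]]. pose proof (be_top x) as T. rewrite <- H2 in T.
  apply be_sup in T. destruct T as [s [Hs Hx]]. eauto.
Qed.

Lemma cpal x : cpfilter Q (fun a => proj1_sig (be a) x).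
Proof.
  split; [|split; [|split; [|split]]].
  - exists (rtop Q). apply be_top.
  - intros a b Ha H. exact (be_mono a b x H Ha).
  - intros a b Ha Hb. apply be_meet. auto.
  - unfold rbot. intro H. apply be_sup in H. destruct H as [s [[] _]].
  - intros S H. apply be_sup in H. exact H.
Qed.

Definition alf (x : C) : CQ Q := exist _ (fun a => proj1_sig (be a) x) (cpal x).

Lemma bisec_be s : partial_isometry Q s -> bisection C (proj1_sig (be s)).
Proof. intro P. apply (pi_bisec C HC). apply (m_pi be Hbe). exact P. Qed.

Lemma alf_cov : covering alf.
Proof.
  pose proof (cat_cod_dom C HC) as cd. pose proof (cat_dom_cod C HC) as dc.
  pose proof (cat_dom_dom C HC) as dd. pose proof (cat_cod_cod C HC) as cc.
  pose proof (cat_id_r C HC) as idr. pose proof (cat_id_l C HC) as idl.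
  assert (fd : forall x, alf (dom x) = @dom (CQ Q) (alf x)).
  { intro x. apply filt_ext. intro a. rewrite (dom_specC Q HQ). simpl. split.
    - intro H. destruct (be_cover x) as [s [Ps Hs]].
      exists (rmul s (rmeet a re)). split.
      + rewrite be_mul. exists x, (dom x). split; [exact Hs|split; [|split; [symmetry; apply cd|symmetry; apply idr]]].
        apply be_meet. split; [exact H|]. rewrite be_e. unfold ids. apply dd.
      + rewrite (star_mul Q HQ), (star_fix Q HQ).
        * apply (A.ltrans Q HQ) with (rmeet a re); [apply (A.proj_le_r Q HQ), (A.star_proj' Q HQ)|apply (A.mlb1 Q HQ)].
        * apply (proj_mul_closed Q HQ); [apply (A.star_proj' Q HQ)|apply (A.mlb2 Q HQ)].
    - intros [c [Hc H]]. apply be_mono with (rstar c); [exact H|]. rewrite be_star. exists x. auto. }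
  assert (fc : forall x, alf (cod x) = @cod (CQ Q) (alf x)).
  { intro x. apply filt_ext. intro a. rewrite (cod_specC Q HQ). simpl. split.
    - intro H. destruct (be_cover x) as [s [Ps Hs]].
      exists (rmul (rmeet a re) s). split.
      + rewrite be_mul. exists (cod x), x. split; [|split; [exact Hs|split; [apply dc|symmetry; apply idl]]].
        apply be_meet. split; [exact H|]. rewrite be_e. unfold ids. apply dc.
      + rewrite (plus_mul_r Q HQ), (plus_fix Q HQ).
        * apply (A.ltrans Q HQ) with (rmeet a re); [apply (A.proj_le_l Q HQ), (A.plus_proj' Q HQ)|apply (A.mlb1 Q HQ)].
        * apply (proj_mul_closed Q HQ); [apply (A.mlb2 Q HQ)|apply (A.plus_proj' Q HQ)].
    - intros [c [Hc H]]. apply be_mono with (rplus c); [exact H|]. rewrite be_plus. exists x. auto. }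
  split.
  - exact fd.
  - exact fc.
  - intros x y Hxy.
    assert (E' : @dom (CQ Q) (alf x) = @cod (CQ Q) (alf y)) by (rewrite <- fd, <- fc, Hxy; reflexivity).
    apply (composable_iff Q HQ) in E'. apply filt_ext. intro c. simpl (proj1_sig (alf (comp x y))).
    change (@comp (CQ Q) (alf x) (alf y)) with (filt_comp Q (alf x) (alf y)).
    rewrite (comp_spec Q HQ _ _ E'). simpl. split.
    + intro H. destruct (be_cover x) as [s [Ps Hs]]. destruct (be_cover y) as [t [Pt Ht]].
      set (c' := rmeet c (rmul s t)).
      assert (Hc' : proj1_sig (be c') (comp x y)).
      { apply be_meet. split; [exact H|]. rewrite be_mul. exists x, y. auto. }
      assert (Pst : partial_isometry Q (rmul s t)) by (apply (pi_mul Q HQ); assumption).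
      exists (rmul (rplus c') s), t. split; [|split; [exact Ht|]].
      * rewrite be_mul. exists (cod x), x. split; [|split; [exact Hs|split; [apply dc|symmetry; apply idl]]].
        rewrite be_plus. exists (comp x y). split; [exact Hc'|]. apply (cat_comp_cod C HC). exact Hxy.
      * rewrite (mul_assoc Q HQ), <- (pi_l Q (rmul s t) c'); [apply (A.mlb1 Q HQ)|exact Pst|apply (A.mlb2 Q HQ)].
    + intros [a [b [Ha [Hb H]]]]. apply be_mono with (rmul a b); [exact H|]. rewrite be_mul.
      exists x, y. auto.
  - intros V HV. apply (cont_into Q C alf); [|exact HV]. intros a _. exact (proj2_sig (be a)).
  - intros x y E1 E2. destruct (be_cover x) as [s [Ps Hs]].
    assert (Hy : proj1_sig (be s) y).
    { change (proj1_sig (alf y) s). rewrite <- E1. exact Hs. }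
    apply (proj1 (bisec_be s Ps)); assumption.
  - intros x y E1 E2. destruct (be_cover x) as [s [Ps Hs]].
    assert (Hy : proj1_sig (be s) y).
    { change (proj1_sig (alf y) s). rewrite <- E1. exact Hs. }
    apply (proj2 (bisec_be s Ps)); assumption.
  - intros e Y Ie EY. destruct (cp_has_PI Q HQ _ (fcp Q Y)) as [s [Ps Hs]].
    assert (He : proj1_sig (be (rstar s)) e).
    { change (proj1_sig (alf e) (rstar s)). rewrite EY, (dom_specC Q HQ). exists s. split; [exact Hs|apply (A.lrefl Q HQ)]. }
    rewrite be_star in He. destruct He as [x [Hx Ex]]. exists x. split; [exact Ex|].
    apply filt_ext. apply (L1' Q HQ) with s; [apply fcp|apply fcp|exact Ps|exact Hx|exact Hs|].
    intro b. rewrite <- !(dom_specC Q HQ), <- fd, Ex, EY. reflexivity.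
  - intros e Y Ie EY. destruct (cp_has_PI Q HQ _ (fcp Q Y)) as [s [Ps Hs]].
    assert (He : proj1_sig (be (rplus s)) e).
    { change (proj1_sig (alf e) (rplus s)). rewrite EY, (cod_specC Q HQ). exists s. split; [exact Hs|apply (A.lrefl Q HQ)]. }
    rewrite be_plus in He. destruct He as [x [Hx Ex]]. exists x. split; [exact Ex|].
    apply filt_ext. apply (L1p' Q HQ) with s; [apply fcp|apply fcp|exact Ps|exact Hx|exact Hs|].
    intro b. rewrite <- !(cod_specC Q HQ), <- fc, Ex, EY. reflexivity.
Qed.

Lemma part5b : exists! al : C -> CQ Q, covering al /\
          forall x, set_eq (proj1_sig (al x)) (preimage be (omega C x)).
Proof.
  exists alf. split; [split; [exact alf_cov|intros x a; reflexivity]|].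
  intros al' [_ E]. apply functional_extensionality. intro x. apply filt_ext. intro a.
  symmetry. apply E.
Qed.
End P5b.

End J.
Import J.

Theorem mainTheorem18 :
  (* Omega is well defined on objects and morphisms *)
  (forall C : topcat, etale C -> rqf_axioms (Omega C)) /\
  (forall (C C' : topcat) (th : C' -> C), etale C -> etale C' -> covering th ->
     exists f : Omega C -> Omega C', rqf_morphism f /\
       forall U, set_eq (proj1_sig (f U)) (preimage th (proj1_sig U))) /\
  (* C(-) is well defined on objects and morphisms *)
  (forall Q : rqf_ops, rqf_axioms Q -> etale (CQ Q)) /\
  (forall (Q Q' : rqf_ops) (ph : Q' -> Q), rqf_axioms Q -> rqf_axioms Q' ->
     rqf_morphism ph ->
     exists g : CQ Q -> CQ Q', covering g /\
       forall A, set_eq (proj1_sig (g A)) (preimage ph (proj1_sig A))) /\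
  (* the adjunction bijection *)
  (forall (C : topcat) (Q : rqf_ops), etale C -> rqf_axioms Q ->
     (forall al : C -> CQ Q, covering al ->
        exists! be : Q -> Omega C, rqf_morphism be /\
          forall a, set_eq (proj1_sig (be a)) (preimage al (chi Q a))) /\
     (forall be : Q -> Omega C, rqf_morphism be ->
        exists! al : C -> CQ Q, covering al /\
          forall x, set_eq (proj1_sig (al x)) (preimage be (omega C x))) /\
     (forall (al : C -> CQ Q) (be : Q -> Omega C), covering al -> rqf_morphism be ->
        ((forall a, set_eq (proj1_sig (be a)) (preimage al (chi Q a))) <->
         (forall x, set_eq (proj1_sig (al x)) (preimage be (omega C x)))))) /\
  (* naturality in C and Q *)
  (forall (C C' : topcat) (Q Q' : rqf_ops) (th : C' -> C) (ph : Q' -> Q)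
          (al : C -> CQ Q) (be : Q -> Omega C)
          (al' : C' -> CQ Q') (be' : Q' -> Omega C'),
     etale C -> etale C' -> rqf_axioms Q -> rqf_axioms Q' ->
     covering th -> rqf_morphism ph -> covering al -> rqf_morphism be ->
     (forall a, set_eq (proj1_sig (be a)) (preimage al (chi Q a))) ->
     (forall x', set_eq (proj1_sig (al' x')) (preimage ph (proj1_sig (al (th x'))))) ->
     (forall a', set_eq (proj1_sig (be' a')) (preimage th (proj1_sig (be (ph a'))))) ->
     forall a', set_eq (proj1_sig (be' a')) (preimage al' (chi Q' a'))).

Proof.
  split; [exact Omega_axioms|].
  split; [exact part2|].
  split; [exact CQ_etale|].
  split; [exact part4|].
  split.
  - intros C Q HC HQ. split; [exact (part5a C Q HC HQ)|split; [exact (part5b C Q HC HQ)|]].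
    intros al be Hal Hbe. split.
    + intros H x a. unfold preimage, omega. split; intro K; apply (H a x); exact K.
    + intros H a x. unfold preimage, chi. split; intro K; apply (H x a); exact K.
  - intros C C' Q Q' th ph al be al' be' HC HC' HQ HQ' Hth Hph Hal Hbe H1 H2 H3 a' x'.
    unfold preimage, chi. rewrite (H3 a' x'). unfold preimage. rewrite (H1 (ph a') (th x')).
    unfold preimage, chi. rewrite (H2 x' a'). unfold preimage. reflexivity.
Qed.
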